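(* Let $\nu_0=0$, $s>0$, $\gamma\ge0$, $u>0$, and let $g_\infty=\lim_{r\to\infty}g_r$ and $y_\infty(y_0)=\lim_{t\to\infty}y(t;y_0)$. Then $g_\infty(y_\infty(1))=1$, and for all $y_0\in[0,1)$: (i) if $0<u<s$, or $u=s<\gamma$, then $g_\infty(y_\infty(y_0))=0$; (ii) if $u>\check u$, or $s\ge\gamma$ and $s\le u\le\check u$, then $g_\infty(y_\infty(y_0))=1$; (iii) if $s<\gamma$ and $s<u\le\check u$, then $g_\infty(y_\infty(y_0))=0$ if $y_0\le\bar y_3$, and $g_\infty(y_\infty(y_0))=1$ if $y_0>\bar y_3$.
   Context: $y(t;y_0)$ solves $\dot y=-y(1-y)[s+\gamma(1-y)]+u(1-y)$, $y(0)=y_0$. For $\gamma>0$: $\check u=\frac1\gamma\big(\frac{s+\gamma}2\big)^2$, $\sigma=(1+s/\gamma)^2-4u/\gamma$, and, when $\sigma\ge0$, $\bar y_3=\frac12(1+\frac s\gamma+\sqrt\sigma)$. For $\gamma=0$, set $\check u=+\infty$. Embedded ASG process $(a_r)_{r\ge0}$: a random finite rooted tree started from a single unmarked root. Independently at each leaf: at rate $s$, two children (left, right) are attached; at rate $\gamma$, three children (left, middle, right) are attached; at rate $u$, one child is attached and the leaf is marked $\times$. Typing: vertex types propagate from the leaf types towards the root. A $\times$-marked vertex has type 1; an outdegree-2 vertex has type 1 iff both children have type 1; an outdegree-3 vertex has type 0 iff its left child has type 0 or its middle and right children both have type 0. Ancestral leaf $\lambda_v$: a leaf is its own ancestral leaf.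 For outdegree 2, take $\lambda$ of the right child if it has type 0, else $\lambda$ of the left child. For outdegree 3, take $\lambda$ of the right child if the middle and right children both have type 0, else $\lambda$ of the left child. For outdegree 1, take $\lambda$ of the child. $g_r(y_0)$ is the probability that the ancestral leaf of the root of $a_r$ has type 1 when the leaves are typed independently, each with type 1 with probability $y_0$. *)

(* Defs.v *)
From Stdlib Require Import Reals Lra List Bool.
From Coquelicot Require Import Coquelicot.
Import ListNotations.
Open Scope R_scope.

Definition drift (s g u yv : R) : R :=
  - yv * (1 - yv) * (s + g * (1 - yv)) + u * (1 - yv).

Definition IsSolution (s g u : R) (y : R -> R -> R) : Prop :=
  forall y0, 0 <= y0 <= 1 ->
    y y0 0 = y0 /\ forall t, 0 <= t -> is_derive (y y0) t (drift s g u (y y0 t)).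

Definition ucheck (s g : R) : Rbar :=
  if Req_EM_T g 0 then p_infty else Finite ((1 / g) * ((s + g) / 2) ^ 2).
Definition sigma (s g u : R) : R := (1 + s / g) ^ 2 - 4 * u / g.
Definition ybar3 (s g u : R) : R := / 2 * (1 + s / g + sqrt (sigma s g u)).

(** Embedded ASG trees *)
Inductive tree : Type :=
| Leaf : tree
| Mark : tree -> tree
| Node2 : tree -> tree -> tree
| Node3 : tree -> tree -> tree -> tree.

Fixpoint nleaves (T : tree) : nat :=
  match T with
  | Leaf => 1%nat
  | Mark c => nleaves c
  | Node2 a b => (nleaves a + nleaves b)%nat
  | Node3 a b c => (nleaves a + nleaves b + nleaves c)%nat
  end.

Fixpoint trans (s g u : R) (T : tree) : list (R * tree) :=
  match T with
  | Leaf => [(s, Node2 Leaf Leaf); (g, Node3 Leaf Leaf Leaf); (u, Mark Leaf)]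
  | Mark c => map (fun p => (fst p, Mark (snd p))) (trans s g u c)
  | Node2 a b =>
      map (fun p => (fst p, Node2 (snd p) b)) (trans s g u a)
   ++ map (fun p => (fst p, Node2 a (snd p))) (trans s g u b)
  | Node3 a b c =>
      map (fun p => (fst p, Node3 (snd p) b c)) (trans s g u a)
   ++ map (fun p => (fst p, Node3 a (snd p) c)) (trans s g u b)
   ++ map (fun p => (fst p, Node3 a b (snd p))) (trans s g u c)
  end.

Definition totrate (s g u : R) (T : tree) : R := (s + g + u) * INR (nleaves T).

(* jump-chain paths of n steps from a single leaf:
   (probability of the path in the embedded chain, list of the successive
    exponential holding rates, tree reached) *)
Fixpoint paths (s g u : R) (n : nat) : list (R * list R * tree) :=
  match n with
  | O => [(1, [], Leaf)]
  | S n' =>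
      flat_map (fun q =>
        let '(w, rs, T) := q in
        map (fun p => (w * fst p / totrate s g u T, rs ++ [totrate s g u T], snd p))
            (trans s g u T))
        (paths s g u n')
  end.

(* P(E_1 + ... + E_k <= r) for independent E_i ~ Exp(l_i), ls = [l_1;...;l_k] *)
Fixpoint hypoCDF (ls : list R) (r : R) : R :=
  match ls with
  | [] => 1
  | l :: ls' => RInt (fun x => l * exp (- (l * x)) * hypoCDF ls' (r - x)) 0 r
  end.

(** Typing and ancestral leaf; leaves typed left-to-right by a list of booleans
    (true = type 1) *)
Fixpoint typ (T : tree) (l : list bool) : bool :=
  match T with
  | Leaf => hd false l
  | Mark _ => true
  | Node2 a b => typ a (firstn (nleaves a) l) && typ b (skipn (nleaves a) l)
  | Node3 a b c =>
      let la := firstn (nleaves a) l in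
      let l' := skipn (nleaves a) l in
      let lb := firstn (nleaves b) l' in
      let lc := skipn (nleaves b) l' in
      negb (negb (typ a la) || (negb (typ b lb) && negb (typ c lc)))
  end.

Fixpoint anctyp (T : tree) (l : list bool) : bool :=
  match T with
  | Leaf => hd false l
  | Mark c => anctyp c l
  | Node2 a b =>
      let la := firstn (nleaves a) l in
      let lb := skipn (nleaves a) l in
      if negb (typ b lb) then anctyp b lb else anctyp a la
  | Node3 a b c =>
      let la := firstn (nleaves a) l in
      let l' := skipn (nleaves a) l in
      let lb := firstn (nleaves b) l' in
      let lc := skipn (nleaves b) l' in
      if negb (typ b lb) && negb (typ c lc) then anctyp c lc else anctyp a la
  end.

Fixpoint allbools (n : nat) : list (list bool) :=
  match n with
  | O => [[]]
  | S n' => flat_map (fun l => [true :: l; false :: l]) (allbools n')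
  end.

Fixpoint bweight (y0 : R) (l : list bool) : R :=
  match l with
  | [] => 1
  | b :: l' => (if b then y0 else 1 - y0) * bweight y0 l'
  end.

Definition hanc (T : tree) (y0 : R) : R :=
  fold_right Rplus 0
    (map (fun l => bweight y0 l * (if anctyp T l then 1 else 0)) (allbools (nleaves T))).

(* contribution of the configurations reached after exactly n jumps by time r *)
Definition gterm (s g u r y0 : R) (n : nat) : R :=
  fold_right Rplus 0
    (map (fun q => let '(w, rs, T) := q in
                   w * (hypoCDF rs r - hypoCDF (rs ++ [totrate s g u T]) r) * hanc T y0)
         (paths s g u n)).

Definition gr (s g u r y0 : R) : R := Series (gterm s g u r y0).

Definition ginf_yinf (s g u : R) (y : R -> R -> R) (y0 v : R) : Prop :=
  exists yi : R, is_lim (y y0) p_infty yi /\ is_lim (fun r => gr s g u r yi) p_infty v.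

(* Main.v *)
Require Import Defs.
From Stdlib Require Import Reals Lra Lia List Bool Arith Classical.
From Coquelicot Require Import Coquelicot.
Import ListNotations.
Open Scope R_scope.

Lemma exd_cont (f : R -> R) x : ex_derive f x -> continuous f x.
Proof. intros H. apply (ex_derive_continuous (K:=R_AbsRing) (V:=R_NormedModule)). exact H. Qed.

Lemma cont_exp_lin (a : R) x : continuous (fun z => exp (a * z)) x.
Proof. apply exd_cont. auto_derive. auto. Qed.

Lemma ex_RInt_cont (f : R -> R) a b : (forall x, continuous f x) -> ex_RInt f a b.
Proof. intros H. apply (ex_RInt_continuous (V:=R_CompleteNormedModule)). intros; apply H. Qed.

Lemma RInt_exp (a r : R) : a <> 0 ->
  RInt (fun z => exp (a * z)) 0 r = (exp (a * r) - 1) / a.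
Proof.
  intros Ha.
  apply is_RInt_unique.
  assert (E: (exp (a * r) - 1) / a = minus ((fun z => exp (a*z) / a) r) ((fun z => exp (a*z)/a) 0)).
  { unfold minus, plus, opp; simpl. rewrite Rmult_0_r, exp_0. field. auto. }
  rewrite E. apply (is_RInt_derive (fun z => exp (a*z)/a)).
  - intros x _. auto_derive. auto. field. auto.
  - intros x _. apply cont_exp_lin.
Qed.

Lemma RInt_le_cont (f g : R -> R) r : 0 <= r ->
  (forall x, continuous f x) -> (forall x, continuous g x) ->
  (forall x, 0 < x < r -> f x <= g x) -> RInt f 0 r <= RInt g 0 r.
Proof.
  intros Hr Hf Hg H. apply RInt_le; auto; apply ex_RInt_cont; auto.
Qed.

Lemma RInt_scal_R (f : R -> R) a b (c : R) : (forall x, continuous f x) ->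
  RInt (fun x => c * f x) a b = c * RInt f a b.
Proof.
  intros Hf. apply (RInt_scal f a b c). apply ex_RInt_cont; auto.
Qed.

Lemma hypo_cons_eq l ls r : (forall x, continuous (hypoCDF ls) x) ->
  hypoCDF (l :: ls) r = l * exp (- (l * r)) * RInt (fun z => exp (l * z) * hypoCDF ls z) 0 r.
Proof.
  intros Hc. simpl.
  set (f := fun z => l * exp (- (l * (r - z))) * hypoCDF ls z).
  assert (Hfc : forall x, continuous f x).
  { intros x. unfold f. apply (continuous_mult (fun z => l * exp (- (l * (r - z)))) (hypoCDF ls)).
    apply exd_cont. auto_derive. auto. apply Hc. }
  set (h := fun x => l * exp (- (l * x)) * hypoCDF ls (r - x)).
  assert (Hhc : forall x, continuous h x).
  { intros x. unfold h. apply (continuous_mult (fun z => l * exp (- (l * z))) (fun x => hypoCDF ls (r - x))).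
    apply exd_cont. auto_derive. auto.
    apply (continuous_comp (fun x => r - x) (hypoCDF ls)). apply exd_cont; auto_derive; auto. apply Hc. }
  assert (E1 : RInt (fun y => scal (-1) (f (-1 * y + r))) 0 r = -1 * RInt h 0 r).
  { rewrite <- (RInt_scal_R h) by auto.
    apply RInt_ext. intros x _. unfold f, h, scal; simpl; unfold mult; simpl.
      replace (r - (-1 * x + r)) with x by ring. replace (-1 * x + r) with (r - x) by ring. ring. }
  assert (E2 : RInt (fun y => scal (-1) (f (-1 * y + r))) 0 r = RInt f (-1 * 0 + r) (-1 * r + r)).
  { apply (RInt_comp_lin (V:=R_CompleteNormedModule) f (-1) r 0 r). apply ex_RInt_cont; auto. }
  rewrite E1 in E2.
  replace (-1 * 0 + r) with r in E2 by ring. replace (-1 * r + r) with 0 in E2 by ring.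
  rewrite <- (opp_RInt_swap (V:=R_CompleteNormedModule) f 0 r) in E2 by (apply ex_RInt_cont; auto).
  unfold opp in E2; simpl in E2.
  change (RInt h 0 r = l * exp (- (l * r)) * RInt (fun z => exp (l * z) * hypoCDF ls z) 0 r).
  assert (E3 : RInt h 0 r = RInt f 0 r).
  { simpl in E2. unfold R_CompleteNormedModule in *. simpl in *. lra. }
  rewrite E3.
  rewrite <- RInt_scal_R.
  - apply RInt_ext. intros x _. unfold f. simpl.
    replace (- (l * (r - x))) with (- (l * r) + l * x) by ring. rewrite exp_plus. ring.
  - intros x. apply (continuous_mult (fun z => exp (l * z)) (hypoCDF ls)). apply cont_exp_lin. apply Hc.
Qed.

Lemma hypo_cont ls : forall x, continuous (hypoCDF ls) x.
Proof.
  induction ls as [|l ls IH]; intros x.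
  - simpl. apply continuous_const.
  - apply (continuous_ext_loc _ (fun r => l * exp (- (l * r)) * RInt (fun z => exp (l * z) * hypoCDF ls z) 0 r)).
    + apply filter_forall. intros r. symmetry. apply hypo_cons_eq; auto.
    + set (g := fun z => exp (l * z) * hypoCDF ls z).
      assert (Hg : forall x, continuous g x).
      { intros z. apply (continuous_mult (fun z => exp (l * z)) (hypoCDF ls)). apply cont_exp_lin. apply IH. }
      apply (continuous_mult (fun r => l * exp (- (l * r))) (fun r => RInt g 0 r)).
      * apply exd_cont. auto_derive. auto.
      * apply exd_cont. eexists. apply (is_derive_RInt g (fun r => RInt g 0 r) 0 x).
        -- apply filter_forall. intros b. apply (RInt_correct (V:=R_CompleteNormedModule)). apply ex_RInt_cont; auto.
        -- apply Hg.
Qed.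

Lemma RInt_zero a b : RInt (fun _ => 0) a b = 0.
Proof. rewrite RInt_const. unfold scal; simpl; unfold mult; simpl. ring. Qed.

Lemma exp_inv_prod a : exp (- a) * exp a = 1.
Proof. rewrite <- exp_plus. replace (-a + a) with 0 by ring. apply exp_0. Qed.

Lemma cont_eH l ls x : continuous (fun z => exp (l * z) * hypoCDF ls z) x.
Proof. apply (continuous_mult (fun z => exp (l * z)) (hypoCDF ls)). apply cont_exp_lin. apply hypo_cont. Qed.

Lemma hypo_bounds ls : List.Forall (fun l => 0 < l) ls -> forall r, 0 <= r -> 0 <= hypoCDF ls r <= 1.
Proof.
  induction ls as [|l ls IH]; intros Hp r Hr.
  - simpl; lra.
  - apply List.Forall_cons_iff in Hp as [Hl Hp].
    rewrite hypo_cons_eq by apply hypo_cont.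
    set (K := RInt _ 0 r).
    assert (K0 : 0 <= K).
    { rewrite <- (RInt_zero 0 r). apply RInt_le_cont; auto. intros; apply continuous_const.
      apply cont_eH. intros x Hx. pose proof (IH Hp x ltac:(lra)). pose proof (exp_pos (l*x)). nra. }
    assert (K1 : K <= (exp (l * r) - 1) / l).
    { rewrite <- RInt_exp by lra. apply RInt_le_cont; auto. apply cont_eH. apply cont_exp_lin.
      intros x Hx. pose proof (IH Hp x ltac:(lra)). pose proof (exp_pos (l*x)). nra. }
    pose proof (exp_inv_prod (l*r)). pose proof (exp_pos (l*r)). pose proof (exp_pos (-(l*r))).
    assert (K1' : l * K <= exp (l * r) - 1).
    { apply Rmult_le_compat_l with (r := l) in K1; [|lra]. replace (l * ((exp (l * r) - 1) / l)) with (exp (l*r) - 1) in K1 by (field; lra). lra. }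
    split. apply Rmult_le_pos; [apply Rmult_le_pos|]; lra.
    nra.
Qed.

Lemma hypo_app_le ls lam : List.Forall (fun l => 0 < l) ls -> 0 < lam -> forall r, 0 <= r ->
  hypoCDF (ls ++ [lam]) r <= hypoCDF ls r.
Proof.
  induction ls as [|l ls IH]; intros Hp Hlam r Hr.
  - simpl app. pose proof (hypo_bounds [lam] ltac:(constructor; auto) r Hr). simpl hypoCDF at 2. lra.
  - apply List.Forall_cons_iff in Hp as [Hl Hp].
    simpl app. rewrite !hypo_cons_eq by apply hypo_cont.
    apply Rmult_le_compat_l. pose proof (exp_pos (-(l*r))). nra.
    apply RInt_le_cont; auto. apply cont_eH. apply cont_eH.
    intros x Hx. pose proof (IH Hp Hlam x ltac:(lra)). pose proof (exp_pos (l*x)). nra.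
Qed.

Definition prodf (th : R) (ls : list R) : R := fold_right (fun l acc => l / (l + th) * acc) 1 ls.

Lemma hypo_chernoff th ls : 0 < th -> List.Forall (fun l => 0 < l) ls -> forall r, 0 <= r ->
  hypoCDF ls r <= exp (th * r) * prodf th ls.
Proof.
  intros Hth. induction ls as [|l ls IH]; intros Hp r Hr.
  - simpl. pose proof (exp_ineq1_le (th * r)). nra.
  - apply List.Forall_cons_iff in Hp as [Hl Hp].
    rewrite hypo_cons_eq by apply hypo_cont.
    set (P := prodf th ls).
    assert (HP : 0 <= P).
    { unfold P. clear -Hp Hth. induction ls; simpl. lra. apply List.Forall_cons_iff in Hp as [? Hp].
      apply Rmult_le_pos; auto. apply Rdiv_le_0_compat; lra. }
    assert (K1 : RInt (fun z => exp (l * z) * hypoCDF ls z) 0 r <= P * ((exp ((l + th) * r) - 1) / (l + th))).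
    { rewrite <- RInt_exp by lra. rewrite <- RInt_scal_R by apply cont_exp_lin.
      apply RInt_le_cont; auto. apply cont_eH.
      intros x. apply (continuous_mult (fun _ => P) (fun z => exp ((l+th)*z))). apply continuous_const. apply cont_exp_lin.
      intros x Hx. pose proof (IH Hp x ltac:(lra)). pose proof (exp_pos (l*x)).
      replace ((l + th) * x) with (l * x + th * x) by ring. rewrite exp_plus.
      apply Rle_trans with (exp (l * x) * (exp (th * x) * P)). apply Rmult_le_compat_l; [lra|]. unfold P; lra. right; ring. }
    simpl prodf. fold P.
    pose proof (exp_pos (- (l*r))). pose proof (exp_pos ((l+th)*r)).
    apply Rle_trans with (l * exp (- (l * r)) * (P * ((exp ((l + th) * r) - 1) / (l + th)))).
    apply Rmult_le_compat_l; [nra|auto].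
    assert (E : exp (- (l * r)) * exp ((l + th) * r) = exp (th * r)).
    { rewrite <- exp_plus. f_equal. ring. }
    assert (E2 : l * exp (- (l * r)) * (P * ((exp ((l + th) * r) - 1) / (l + th)))
      = exp (th * r) * (l / (l + th) * P) - l * exp (- (l*r)) * P / (l + th)).
    { rewrite <- E. field. lra. }
    rewrite E2.
    assert (0 <= l * exp (- (l*r)) * P / (l + th)).
    { apply Rdiv_le_0_compat; [|lra]. apply Rmult_le_pos; nra. }
    lra.
Qed.

Lemma hypo_tail th ls : 0 < th -> List.Forall (fun l => 2 * th <= l) ls -> forall r, 0 <= r ->
  1 - hypoCDF ls r <= 3 ^ length ls * exp (- (th * r)).
Proof.
  intros Hth. induction ls as [|l ls IH]; intros Hp r Hr.
  - simpl. pose proof (exp_pos (- (th * r))). lra.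
  - apply List.Forall_cons_iff in Hp as [Hl Hp].
    rewrite hypo_cons_eq by apply hypo_cont.
    set (B := 3 ^ length ls).
    assert (HB : 1 <= B). { unfold B. apply pow_R1_Rle. lra. }
    set (K := RInt (fun z => exp (l * z) * hypoCDF ls z) 0 r).
    assert (K1 : (exp (l * r) - 1) / l - K <= B * ((exp ((l - th) * r) - 1) / (l - th))).
    { unfold K. rewrite <- RInt_exp by lra. rewrite <- RInt_exp by lra.
      rewrite <- RInt_scal_R by apply cont_exp_lin.
      assert (Hm : RInt (fun z => exp (l * z)) 0 r - RInt (fun z => exp (l * z) * hypoCDF ls z) 0 r
         = RInt (fun z => exp (l * z) - exp (l * z) * hypoCDF ls z) 0 r).
      { symmetry. apply (RInt_minus (V:=R_CompleteNormedModule)); apply ex_RInt_cont. apply cont_exp_lin. apply cont_eH. }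
      rewrite Hm.
      apply RInt_le_cont; auto.
      intros x. apply (continuous_minus (fun z => exp (l * z)) (fun z => exp (l * z) * hypoCDF ls z)). apply cont_exp_lin. apply cont_eH.
      intros x. apply (continuous_mult (fun _ => B) (fun z => exp ((l-th)*z))). apply continuous_const. apply cont_exp_lin.
      intros x Hx. pose proof (IH Hp x ltac:(lra)). pose proof (exp_pos (l*x)).
      replace ((l - th) * x) with (l * x + - (th * x)) by ring. rewrite exp_plus.
      fold B in H. nra. }
    simpl length. 
    pose proof (exp_pos (- (l*r))). pose proof (exp_pos ((l-th)*r)). pose proof (exp_pos (l*r)).
    assert (E : exp (- (l * r)) * exp ((l - th) * r) = exp (- (th * r))).
    { rewrite <- exp_plus. f_equal. ring. }
    assert (E1 : exp (- (l * r)) * exp (l * r) = 1) by apply exp_inv_prod.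
    assert (Ht : exp (- (l * r)) <= exp (- (th * r))).
    { destruct (Req_dec r 0). subst. rewrite !Rmult_0_r, Ropp_0. lra. left. apply exp_increasing. nra. }
    pose proof (exp_pos (- (th * r))).
    assert (K2 : l * K >= exp (l * r) - 1 - l * B * ((exp ((l - th) * r) - 1) / (l - th))).
    { apply Rmult_le_compat_l with (r := l) in K1; [|lra].
      replace (l * ((exp (l * r) - 1) / l - K)) with (exp (l*r) - 1 - l * K) in K1 by (field; lra). lra. }
    assert (E3 : l * exp (- (l * r)) * K = exp (- (l*r)) * (l * K)) by ring.
    rewrite E3.
    apply Rle_trans with (1 - exp (- (l * r)) * (exp (l * r) - 1 - l * B * ((exp ((l - th) * r) - 1) / (l - th)))).
    nra.
    assert (E4 : 1 - exp (- (l * r)) * (exp (l * r) - 1 - l * B * ((exp ((l - th) * r) - 1) / (l - th)))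
       = exp (- (l * r)) + B * (l / (l - th)) * exp (- (th * r)) - B * (l / (l - th)) * exp (- (l * r))).
    { rewrite <- E. pattern 1 at 1. rewrite <- E1. field. lra. }
    rewrite E4.
    assert (Hq : l / (l - th) <= 2). { apply Rmult_le_reg_r with (l - th). lra. field_simplify; lra. }
    assert (Hq0 : 0 <= l / (l - th)). { apply Rdiv_le_0_compat; lra. }
    assert (0 <= B * (l / (l - th)) * exp (- (l * r))). { apply Rmult_le_pos; [apply Rmult_le_pos|]; lra. }
    assert (B * (l / (l - th)) * exp (- (th * r)) <= 2 * B * exp (- (th * r))).
    { apply Rmult_le_compat_r; [lra|]. nra. }
    assert (exp (- (th * r)) <= B * exp (- (th * r))) by nra.
    simpl. fold B. lra.
Qed.

Definition lsum (l : list R) : R := fold_right Rplus 0 l.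

Lemma lsum_app a b : lsum (a ++ b) = lsum a + lsum b.
Proof. induction a; simpl; [ring|]. rewrite IHa. ring. Qed.

Lemma lsum_map_flat {A B} (f : B -> R) (g : A -> list B) l :
  lsum (map f (flat_map g l)) = lsum (map (fun x => lsum (map f (g x))) l).
Proof. induction l; simpl; auto. rewrite map_app, lsum_app, IHl. auto. Qed.

Lemma lsum_scal {A} (f : A -> R) c l : lsum (map (fun x => c * f x) l) = c * lsum (map f l).
Proof. induction l; simpl; [ring|]. rewrite IHl. ring. Qed.

Lemma lsum_scal_r {A} (f : A -> R) c l : lsum (map (fun x => f x * c) l) = lsum (map f l) * c.
Proof. induction l; simpl; [ring|]. rewrite IHl. ring. Qed.

Lemma lsum_plus {A} (f g : A -> R) l : lsum (map (fun x => f x + g x) l) = lsum (map f l) + lsum (map g l).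
Proof. induction l; simpl; [ring|]. rewrite IHl. ring. Qed.

Lemma lsum_ext_in {A} (f g : A -> R) l : (forall x, In x l -> f x = g x) -> lsum (map f l) = lsum (map g l).
Proof. intros H. f_equal. apply map_ext_in. auto. Qed.

Lemma lsum_le_in {A} (f g : A -> R) l : (forall x, In x l -> f x <= g x) -> lsum (map f l) <= lsum (map g l).
Proof. induction l; simpl; intros H; [lra|]. apply Rplus_le_compat; auto. Qed.

Lemma lsum_nonneg {A} (f : A -> R) l : (forall x, In x l -> 0 <= f x) -> 0 <= lsum (map f l).
Proof. induction l; simpl; intros H; [lra|]. apply Rplus_le_le_0_compat; auto. Qed.

Definition Ex (y : R) (n : nat) (f : list bool -> R) : R :=
  lsum (map (fun l => bweight y l * f l) (allbools n)).

Lemma Ex_0 y f : Ex y 0 f = f [].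
Proof. unfold Ex; simpl. ring. Qed.

Lemma Ex_S y n f : Ex y (S n) f = y * Ex y n (fun l => f (true :: l)) + (1 - y) * Ex y n (fun l => f (false :: l)).
Proof.
  unfold Ex. simpl allbools. rewrite lsum_map_flat.
  rewrite <- !lsum_scal, <- lsum_plus. apply lsum_ext_in. intros x _. simpl. ring.
Qed.

Lemma Ex_ext y n f g : (forall l, f l = g l) -> Ex y n f = Ex y n g.
Proof. intros H. unfold Ex. apply lsum_ext_in. intros; rewrite H; auto. Qed.

Lemma Ex_affine y n a b f : Ex y n (fun l => a + b * f l) = a + b * Ex y n f.
Proof.
  revert a b f. induction n; intros a b f.
  - rewrite !Ex_0. auto.
  - rewrite !Ex_S. rewrite (IHn a b (fun l => f (true :: l))), (IHn a b (fun l => f (false :: l))). ring.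
Qed.

Lemma Ex_const y n c : Ex y n (fun _ => c) = c.
Proof.
  rewrite (Ex_ext y n _ (fun l => c + 0 * 0)) by (intros; ring). rewrite Ex_affine. ring.
Qed.

Lemma Ex_scal_r y n c f : Ex y n (fun l => f l * c) = Ex y n f * c.
Proof.
  rewrite (Ex_ext y n _ (fun l => 0 + c * f l)) by (intros; ring). rewrite Ex_affine. ring.
Qed.

Lemma Ex_scal_l y n c f : Ex y n (fun l => c * f l) = c * Ex y n f.
Proof.
  rewrite (Ex_ext y n _ (fun l => 0 + c * f l)) by (intros; ring). rewrite Ex_affine. ring.
Qed.

Lemma Ex_mono y n f g : 0 <= y <= 1 -> (forall l, f l <= g l) -> Ex y n f <= Ex y n g.
Proof.
  intros Hy. revert f g. induction n; intros f g H.
  - rewrite !Ex_0. auto.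
  - rewrite !Ex_S. pose proof (IHn (fun l => f (true :: l)) (fun l => g (true :: l)) (fun l => H _)).
    pose proof (IHn (fun l => f (false :: l)) (fun l => g (false :: l)) (fun l => H _)). nra.
Qed.

Lemma Ex_fubini y n m (Phi : list bool -> list bool -> R) :
  Ex y (n + m) (fun l => Phi (firstn n l) (skipn n l)) = Ex y n (fun l1 => Ex y m (fun l2 => Phi l1 l2)).
Proof.
  revert Phi. induction n; intros Phi.
  - rewrite Ex_0. simpl. apply Ex_ext. intros; auto.
  - change (S n + m)%nat with (S (n + m)). rewrite !Ex_S.
    rewrite <- (IHn (fun l1 l2 => Phi (true :: l1) l2)), <- (IHn (fun l1 l2 => Phi (false :: l1) l2)). reflexivity.
Qed.

Definition indb (b : bool) : R := if b then 1 else 0.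

Definition Qf (y : R) (T : tree) : R := Ex y (nleaves T) (fun l => indb (typ T l)).

Lemma hanc_Ex T y : hanc T y = Ex y (nleaves T) (fun l => indb (anctyp T l)).
Proof. reflexivity. Qed.

Lemma anc_typ T : forall l, anctyp T l = true -> typ T l = true.
Proof.
  induction T as [|c IH|a IHa b IHb|a IHa b IHb c IHc]; intros l; simpl; auto.
  - destruct (typ b (skipn (nleaves a) l)) eqn:E; simpl.
    + intros H. rewrite (IHa _ H). auto.
    + intros H. rewrite (IHb _ H) in E. discriminate.
  - destruct (typ b _) eqn:Eb; destruct (typ c _) eqn:Ec; simpl; intros H;
      try rewrite (IHa _ H); auto.
    rewrite (IHc _ H) in Ec. discriminate.
Qed.

Lemma anc_typ_false T l : typ T l = false -> anctyp T l = false.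
Proof. intros H. destruct (anctyp T l) eqn:E; auto. rewrite (anc_typ T l E) in H. discriminate. Qed.

Lemma Q_leaf y : Qf y Leaf = y.
Proof. unfold Qf, Ex; simpl. ring. Qed.
Lemma F_leaf y : hanc Leaf y = y.
Proof. unfold hanc; simpl. ring. Qed.
Lemma Q_mark y c : Qf y (Mark c) = 1.
Proof. unfold Qf. simpl typ. apply Ex_const. Qed.
Lemma F_mark y c : hanc (Mark c) y = hanc c y.
Proof. reflexivity. Qed.

Lemma Q_n2 y a b : Qf y (Node2 a b) = Qf y a * Qf y b.
Proof.
  unfold Qf. simpl nleaves. simpl typ.
  rewrite (Ex_fubini y (nleaves a) (nleaves b) (fun l1 l2 => indb (typ a l1 && typ b l2))).
  rewrite <- Ex_scal_r. apply Ex_ext. intros l1.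
  rewrite <- Ex_scal_l.
  apply Ex_ext. intros l2. destruct (typ a l1), (typ b l2); simpl; ring.
Qed.

Lemma F_n2 y a b : hanc (Node2 a b) y = Qf y b * hanc a y.
Proof.
  rewrite !hanc_Ex. unfold Qf. simpl nleaves. simpl anctyp.
  rewrite (Ex_fubini y (nleaves a) (nleaves b) (fun l1 l2 => indb (if negb (typ b l2) then anctyp b l2 else anctyp a l1))).
  rewrite Rmult_comm, <- Ex_scal_r. apply Ex_ext. intros l1.
  rewrite <- Ex_scal_l.
  apply Ex_ext. intros l2. destruct (typ b l2) eqn:E; simpl.
  - ring.
  - rewrite anc_typ_false by auto. simpl. ring.
Qed.

Lemma Q_n3 y a b c : Qf y (Node3 a b c) = Qf y a * (1 - (1 - Qf y b) * (1 - Qf y c)).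
Proof.
  unfold Qf. simpl nleaves. rewrite <- Nat.add_assoc. simpl typ.
  rewrite (Ex_fubini y (nleaves a) (nleaves b + nleaves c)
    (fun la l' => indb (negb (negb (typ a la) || negb (typ b (firstn (nleaves b) l')) && negb (typ c (skipn (nleaves b) l')))))).
  rewrite <- Ex_scal_r. apply Ex_ext. intros la.
  rewrite (Ex_fubini y (nleaves b) (nleaves c)
    (fun lb lc => indb (negb (negb (typ a la) || negb (typ b lb) && negb (typ c lc))))).
  set (Qc := Ex y (nleaves c) (fun l => indb (typ c l))).
  set (Qb := Ex y (nleaves b) (fun l => indb (typ b l))).
  rewrite (Ex_ext y (nleaves b) _ (fun lb => indb (typ a la) * Qc + (indb (typ a la) * (1 - Qc)) * indb (typ b lb))).
  { rewrite Ex_affine. fold Qb. ring. }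
  intros lb. rewrite (Ex_ext y (nleaves c) _ (fun lc => indb (typ a la) * indb (typ b lb) + (indb (typ a la) * (1 - indb (typ b lb))) * indb (typ c lc))).
  { rewrite Ex_affine. fold Qc. ring. }
  intros lc. destruct (typ a la), (typ b lb), (typ c lc); simpl; ring.
Qed.

Lemma F_n3 y a b c : hanc (Node3 a b c) y = (1 - (1 - Qf y b) * (1 - Qf y c)) * hanc a y.
Proof.
  rewrite !hanc_Ex. unfold Qf. simpl nleaves. rewrite <- Nat.add_assoc. simpl anctyp.
  rewrite (Ex_fubini y (nleaves a) (nleaves b + nleaves c)
    (fun la l' => indb (if negb (typ b (firstn (nleaves b) l')) && negb (typ c (skipn (nleaves b) l'))
         then anctyp c (skipn (nleaves b) l') else anctyp a la))).
  rewrite Rmult_comm, <- Ex_scal_r. apply Ex_ext. intros la.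
  rewrite (Ex_fubini y (nleaves b) (nleaves c)
    (fun lb lc => indb (if negb (typ b lb) && negb (typ c lc) then anctyp c lc else anctyp a la))).
  set (Qc := Ex y (nleaves c) (fun l => indb (typ c l))).
  set (Qb := Ex y (nleaves b) (fun l => indb (typ b l))).
  rewrite (Ex_ext y (nleaves b) _ (fun lb => indb (anctyp a la) * Qc + (indb (anctyp a la) * (1 - Qc)) * indb (typ b lb))).
  { rewrite Ex_affine. fold Qb. ring. }
  intros lb. rewrite (Ex_ext y (nleaves c) _ (fun lc => indb (anctyp a la) * indb (typ b lb) + (indb (anctyp a la) * (1 - indb (typ b lb))) * indb (typ c lc))).
  { rewrite Ex_affine. fold Qc. ring. }
  intros lc. destruct (typ b lb) eqn:Eb, (typ c lc) eqn:Ec; simpl; try ring.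
  rewrite anc_typ_false by auto. simpl. ring.
Qed.

Lemma trans_props s g u T : 0 <= s -> 0 <= g -> 0 <= u -> forall p, In p (trans s g u T) ->
  0 <= fst p /\ (nleaves T <= nleaves (snd p) <= nleaves T + 2)%nat.
Proof.
  intros Hs Hg Hu. induction T as [|c IH|a IHa b IHb|a IHa b IHb c IHc]; intros p Hp; simpl in Hp.
  - destruct Hp as [<-|[<-|[<-|[]]]]; simpl; split; auto; lia.
  - apply in_map_iff in Hp as [q [<- Hq]]. destruct (IH q Hq). simpl. auto.
  - apply in_app_iff in Hp as [Hp|Hp]; apply in_map_iff in Hp as [q [<- Hq]].
    + destruct (IHa q Hq). simpl. split; auto; lia.
    + destruct (IHb q Hq). simpl. split; auto; lia.
  - apply in_app_iff in Hp as [Hp|Hp]; [|apply in_app_iff in Hp as [Hp|Hp]]; apply in_map_iff in Hp as [q [<- Hq]].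
    + destruct (IHa q Hq). simpl. split; auto; lia.
    + destruct (IHb q Hq). simpl. split; auto; lia.
    + destruct (IHc q Hq). simpl. split; auto; lia.
Qed.

Lemma T0 s g u T : lsum (map (fun p => fst p) (trans s g u T)) = (s + g + u) * INR (nleaves T).
Proof.
  induction T as [|c IH|a IHa b IHb|a IHa b IHb c IHc]; simpl trans; simpl nleaves.
  - simpl. ring.
  - rewrite map_map. simpl. auto.
  - rewrite map_app, lsum_app, !map_map. simpl. rewrite IHa, IHb, plus_INR. ring.
  - rewrite !map_app, !lsum_app, !map_map. simpl. rewrite IHa, IHb, IHc, !plus_INR. ring.
Qed.

Lemma TA s g u y T : drift s g u y = 0 ->
  lsum (map (fun p => fst p * Qf y (snd p)) (trans s g u T)) = (s + g + u) * INR (nleaves T) * Qf y T.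
Proof.
  intros Hd. unfold drift in Hd.
  induction T as [|c IH|a IHa b IHb|a IHa b IHb c IHc]; simpl trans; simpl nleaves.
  - simpl. rewrite Q_n2, Q_n3, Q_mark, !Q_leaf. simpl INR. nra.
  - rewrite map_map. simpl. rewrite Q_mark.
    rewrite (lsum_ext_in _ (fun p => fst p * 1)) by (intros; rewrite Q_mark; auto).
    rewrite lsum_scal_r. rewrite T0. ring.
  - rewrite map_app, lsum_app, !map_map. simpl. rewrite Q_n2.
    rewrite (lsum_ext_in _ (fun p => fst p * Qf y (snd p) * Qf y b)) by (intros; rewrite Q_n2; ring).
    rewrite (lsum_ext_in (fun x => fst x * Qf y (Node2 a (snd x))) (fun p => Qf y a * (fst p * Qf y (snd p)))) by (intros; rewrite Q_n2; ring).
    rewrite lsum_scal_r, lsum_scal, IHa, IHb, plus_INR. ring.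
  - rewrite !map_app, !lsum_app, !map_map. simpl. rewrite Q_n3.
    rewrite (lsum_ext_in _ (fun p => fst p * Qf y (snd p) * (1 - (1 - Qf y b) * (1 - Qf y c)))) by (intros; rewrite Q_n3; ring).
    rewrite (lsum_ext_in (fun x => fst x * Qf y (Node3 a (snd x) c))
       (fun p => fst p * (Qf y a * Qf y c) + Qf y a * (1 - Qf y c) * (fst p * Qf y (snd p)))) by (intros; rewrite Q_n3; ring).
    rewrite (lsum_ext_in (fun x => fst x * Qf y (Node3 a b (snd x)))
       (fun p => fst p * (Qf y a * Qf y b) + Qf y a * (1 - Qf y b) * (fst p * Qf y (snd p)))) by (intros; rewrite Q_n3; ring).
    rewrite !lsum_plus, !lsum_scal_r, !lsum_scal, !T0, IHa, IHb, IHc, !plus_INR. ring.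
Qed.

Definition kap (s g y : R) : R := (1 - y) * (s + g * (1 - y)).

Lemma TB s g u y T : drift s g u y = 0 ->
  lsum (map (fun p => fst p * hanc (snd p) y) (trans s g u T)) = ((s + g + u) * INR (nleaves T) - kap s g y) * hanc T y.
Proof.
  intros Hd. unfold kap.
  induction T as [|c IH|a IHa b IHb|a IHa b IHb c IHc]; simpl trans; simpl nleaves.
  - simpl. rewrite F_n2, F_n3, F_mark, !Q_leaf, !F_leaf. simpl INR. nra.
  - rewrite map_map. simpl. rewrite F_mark. auto.
  - rewrite map_app, lsum_app, !map_map. simpl. rewrite F_n2.
    rewrite (lsum_ext_in _ (fun p => Qf y b * (fst p * hanc (snd p) y))) by (intros; rewrite F_n2; ring).
    rewrite (lsum_ext_in (fun x => fst x * hanc (Node2 a (snd x)) y) (fun p => (fst p * Qf y (snd p)) * hanc a y)) by (intros; rewrite F_n2; ring).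
    rewrite lsum_scal_r, lsum_scal, IHa, TA, plus_INR by auto. ring.
  - rewrite !map_app, !lsum_app, !map_map. simpl. rewrite F_n3.
    rewrite (lsum_ext_in _ (fun p => (1 - (1 - Qf y b) * (1 - Qf y c)) * (fst p * hanc (snd p) y))) by (intros; rewrite F_n3; ring).
    rewrite (lsum_ext_in (fun x => fst x * hanc (Node3 a (snd x) c) y)
       (fun p => fst p * (Qf y c * hanc a y) + (1 - Qf y c) * hanc a y * (fst p * Qf y (snd p)))) by (intros; rewrite F_n3; ring).
    rewrite (lsum_ext_in (fun x => fst x * hanc (Node3 a b (snd x)) y)
       (fun p => fst p * (Qf y b * hanc a y) + (1 - Qf y b) * hanc a y * (fst p * Qf y (snd p)))) by (intros; rewrite F_n3; ring).
    rewrite !lsum_plus, !lsum_scal_r, !lsum_scal, !T0, IHa, !TA, !plus_INR by auto. ring.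
Qed.

Lemma T0' s g u T : lsum (map fst (trans s g u T)) = (s + g + u) * INR (nleaves T).
Proof. rewrite <- T0. f_equal. Qed.

Definition Epath (s g u : R) (n : nat) (Psi : list R -> tree -> R) : R :=
  lsum (map (fun q => let '(w, rs, T) := q in w * Psi rs T) (paths s g u n)).

Lemma Epath_S s g u n Psi :
  Epath s g u (S n) Psi = Epath s g u n (fun rs T =>
    lsum (map (fun p => fst p / totrate s g u T * Psi (rs ++ [totrate s g u T]) (snd p)) (trans s g u T))).
Proof.
  unfold Epath. simpl paths. rewrite lsum_map_flat.
  apply lsum_ext_in. intros [[w rs] T] _. rewrite map_map.
  rewrite <- lsum_scal. apply lsum_ext_in. intros p _. simpl. unfold Rdiv. ring.
Qed.

Lemma Epath_ext_in s g u n Psi1 Psi2 :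
  (forall w rs T, In (w, rs, T) (paths s g u n) -> Psi1 rs T = Psi2 rs T) ->
  Epath s g u n Psi1 = Epath s g u n Psi2.
Proof.
  intros H. unfold Epath. apply lsum_ext_in. intros [[w rs] T] Hin. rewrite (H w rs T Hin). auto.
Qed.

Lemma Epath_minus s g u n Psi1 Psi2 :
  Epath s g u n (fun rs T => Psi1 rs T - Psi2 rs T) = Epath s g u n Psi1 - Epath s g u n Psi2.
Proof.
  unfold Epath. unfold lsum. induction (paths s g u n) as [|[[w rs] T] l IH]; simpl; [ring|].
  rewrite IH. ring.
Qed.

Lemma Epath_plus s g u n Psi1 Psi2 :
  Epath s g u n (fun rs T => Psi1 rs T + Psi2 rs T) = Epath s g u n Psi1 + Epath s g u n Psi2.
Proof.
  unfold Epath. unfold lsum. induction (paths s g u n) as [|[[w rs] T] l IH]; simpl; [ring|].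
  rewrite IH. ring.
Qed.

Lemma Epath_scal s g u n c Psi :
  Epath s g u n (fun rs T => c * Psi rs T) = c * Epath s g u n Psi.
Proof.
  unfold Epath. unfold lsum. induction (paths s g u n) as [|[[w rs] T] l IH]; simpl; [ring|].
  rewrite IH. ring.
Qed.

Fixpoint rho (n : nat) : R :=
  match n with
  | O => 1
  | S m => rho m * (INR (2 * m + 1) / INR (2 * m + 2))
  end.

Lemma rho_nonneg n : 0 <= rho n.
Proof.
  induction n; simpl; [lra|]. apply Rmult_le_pos; auto. apply Rdiv_le_0_compat. apply pos_INR.
  apply lt_0_INR. lia.
Qed.

Lemma prodf_nonneg th ls : 0 < th -> List.Forall (fun l => 0 < l) ls -> 0 <= prodf th ls.
Proof.
  intros Hth. induction ls; simpl; intros Hp. lra. apply List.Forall_cons_iff in Hp as [? Hp].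
  apply Rmult_le_pos; auto. apply Rdiv_le_0_compat; lra.
Qed.

Lemma prodf_app th ls lam : prodf th (ls ++ [lam]) = prodf th ls * (lam / (lam + th)).
Proof. induction ls; simpl. ring. rewrite IHls. ring. Qed.

Definition path_inv (s g u : R) (n : nat) (w : R) (rs : list R) (T : tree) : Prop :=
  0 <= w /\ length rs = n /\ List.Forall (fun l => s + g + u <= l) rs /\
  (1 <= nleaves T <= 2 * n + 1)%nat /\ prodf (s + g + u) rs <= rho n.

Lemma paths_inv s g u n : 0 < s -> 0 <= g -> 0 <= u ->
  forall w rs T, In (w, rs, T) (paths s g u n) -> path_inv s g u n w rs T.
Proof.
  intros Hs Hg Hu. induction n; intros w rs T Hin.
  - simpl in Hin. destruct Hin as [E|[]]. inversion E; subst.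
    repeat split; simpl; auto; lra.
  - simpl in Hin. apply in_flat_map in Hin as [[[w0 rs0] T0] [Hin0 Hin]].
    apply in_map_iff in Hin as [p [E Hp]]. inversion E; subst; clear E.
    destruct (IHn _ _ _ Hin0) as (Hw & Hl & Hf & Hn & Hpr).
    destruct (trans_props s g u T0 ltac:(lra) Hg Hu p Hp) as [Hp0 Hnp].
    assert (HT : 1 <= INR (nleaves T0)). { apply (le_INR 1). lia. }
    assert (Hlam : s + g + u <= totrate s g u T0). { unfold totrate. nra. }
    repeat split.
    + unfold totrate. apply Rmult_le_pos; [apply Rmult_le_pos; auto|]. left. apply Rinv_0_lt_compat. nra.
    + rewrite length_app. simpl. lia.
    + apply List.Forall_app. split; auto.
    + lia.
    + lia.
    + rewrite prodf_app. simpl rho.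
      assert (Hq : totrate s g u T0 / (totrate s g u T0 + (s + g + u)) <= INR (2 * n + 1) / INR (2 * n + 2)).
      { unfold totrate. set (k := INR (nleaves T0)).
        assert (Hk : k <= INR (2 * n + 1)) by (apply le_INR; lia).
        replace (INR (2 * n + 2)) with (INR (2 * n + 1) + 1) by (rewrite !plus_INR; simpl; ring).
        assert (Hk1 : 1 <= k) by (unfold k; auto).
        assert (Hc : 0 < s + g + u) by lra.
        replace ((s + g + u) * k / ((s + g + u) * k + (s + g + u))) with (k / (k + 1)).
        2:{ field. split. apply Rgt_not_eq. nra. apply Rgt_not_eq. lra. }
        apply Rmult_le_reg_r with ((k + 1) * (INR (2 * n + 1) + 1)). nra.
        field_simplify; nra. }
      apply Rmult_le_compat; auto.
      * apply prodf_nonneg. lra. eapply List.Forall_impl; [|exact Hf]. intros; simpl in *; lra.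
      * apply Rdiv_le_0_compat; unfold totrate; nra.
Qed.

Lemma totrate_pos s g u T : 0 < s -> 0 <= g -> 0 <= u -> (1 <= nleaves T)%nat -> 0 < totrate s g u T.
Proof. intros. unfold totrate. assert (1 <= INR (nleaves T)) by (apply (le_INR 1); lia). nra. Qed.

Lemma Epath_one s g u n : 0 < s -> 0 <= g -> 0 <= u -> Epath s g u n (fun _ _ => 1) = 1.
Proof.
  intros Hs Hg Hu. induction n.
  - unfold Epath; simpl. ring.
  - rewrite Epath_S. transitivity (Epath s g u n (fun _ _ => 1)); [|exact IHn]. apply Epath_ext_in. intros w rs T Hin.
    destruct (paths_inv s g u n Hs Hg Hu w rs T Hin) as (_ & _ & _ & Hn & _).
    pose proof (totrate_pos s g u T Hs Hg Hu ltac:(lia)).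
    rewrite (lsum_ext_in _ (fun p => / totrate s g u T * fst p)) by (intros; unfold Rdiv; ring).
    rewrite lsum_scal, T0. unfold totrate in *. field. split; apply Rgt_not_eq; [apply (lt_INR 0); lia | lra].
Qed.

Lemma Epath_le s g u n Psi1 Psi2 : 0 < s -> 0 <= g -> 0 <= u ->
  (forall w rs T, In (w, rs, T) (paths s g u n) -> Psi1 rs T <= Psi2 rs T) ->
  Epath s g u n Psi1 <= Epath s g u n Psi2.
Proof.
  intros Hs Hg Hu H. unfold Epath. apply lsum_le_in. intros [[w rs] T] Hin.
  destruct (paths_inv s g u n Hs Hg Hu w rs T Hin) as (Hw & _).
  apply Rmult_le_compat_l; auto. eapply H; eauto.
Qed.

Lemma Epath_const s g u n c : 0 < s -> 0 <= g -> 0 <= u -> Epath s g u n (fun _ _ => c) = c.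
Proof.
  intros Hs Hg Hu. rewrite (Epath_ext_in s g u n _ (fun rs T => c * 1)) by (intros; ring).
  rewrite Epath_scal, Epath_one by auto. ring.
Qed.

Lemma gterm_eq s g u r y n :
  gterm s g u r y n = Epath s g u n (fun rs T => (hypoCDF rs r - hypoCDF (rs ++ [totrate s g u T]) r) * hanc T y).
Proof. unfold gterm, Epath, lsum. f_equal. apply map_ext. intros [[w rs] T]. ring. Qed.

Definition Pn s g u r n := Epath s g u n (fun rs _ => hypoCDF rs r).

Lemma Pn_S s g u r n : 0 < s -> 0 <= g -> 0 <= u ->
  Pn s g u r (S n) = Epath s g u n (fun rs T => hypoCDF (rs ++ [totrate s g u T]) r).
Proof.
  intros Hs Hg Hu. unfold Pn. rewrite Epath_S. apply Epath_ext_in. intros w rs T Hin.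
  destruct (paths_inv s g u n Hs Hg Hu w rs T Hin) as (_ & _ & _ & Hn & _).
  pose proof (totrate_pos s g u T Hs Hg Hu ltac:(lia)).
  rewrite (lsum_ext_in _ (fun p => (/ totrate s g u T * hypoCDF (rs ++ [totrate s g u T]) r) * fst p)) by (intros; unfold Rdiv; ring).
  rewrite lsum_scal. first [rewrite (T0 s g u T) | rewrite (T0' s g u T)]. unfold totrate in *. field. split; apply Rgt_not_eq; [apply (lt_INR 0); lia | lra].
Qed.

Lemma Pn_0 s g u r : Pn s g u r 0 = 1.
Proof. unfold Pn, Epath. simpl. ring. Qed.

Lemma hanc_bounds T y : 0 <= y <= 1 -> 0 <= hanc T y <= 1.
Proof.
  intros Hy. rewrite hanc_Ex. split.
  - apply Rle_trans with (Ex y (nleaves T) (fun _ => 0)); [rewrite Ex_const; lra|]. apply Ex_mono; auto. intros l; cbv beta; unfold indb; destruct (anctyp T l); lra.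
  - apply Rle_trans with (Ex y (nleaves T) (fun _ => 1)); [|rewrite Ex_const; lra]. apply Ex_mono; auto. intros l; cbv beta; unfold indb; destruct (anctyp T l); lra.
Qed.

Lemma rates_pos s g u n w rs T : 0 < s -> 0 <= g -> 0 <= u -> In (w, rs, T) (paths s g u n) ->
  List.Forall (fun l => 0 < l) rs.
Proof.
  intros Hs Hg Hu Hin. destruct (paths_inv s g u n Hs Hg Hu w rs T Hin) as (_ & _ & Hf & _).
  eapply List.Forall_impl; [|exact Hf]. intros; simpl in *; lra.
Qed.

Lemma gterm_nonneg s g u r y n : 0 < s -> 0 <= g -> 0 <= u -> 0 <= r -> 0 <= y <= 1 ->
  0 <= gterm s g u r y n.
Proof.
  intros Hs Hg Hu Hr Hy. rewrite gterm_eq. apply Rle_trans with (Epath s g u n (fun _ _ => 0)); [rewrite Epath_const by auto; lra|].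
  apply Epath_le; auto. intros w rs T Hin.
  destruct (paths_inv s g u n Hs Hg Hu w rs T Hin) as (_ & _ & _ & Hn & _).
  pose proof (hypo_app_le rs (totrate s g u T) (rates_pos _ _ _ _ _ _ _ Hs Hg Hu Hin) (totrate_pos s g u T Hs Hg Hu ltac:(lia)) r Hr).
  pose proof (hanc_bounds T y Hy). nra.
Qed.

Fixpoint psum (a : nat -> R) (n : nat) : R :=
  match n with O => 0 | S m => psum a m + a m end.

Lemma sum_n_psum a n : sum_n a n = psum a (S n).
Proof.
  induction n. rewrite sum_O. simpl. rewrite Rplus_0_l. reflexivity.
  rewrite sum_Sn, IHn. reflexivity.
Qed.

Lemma psum_mono a m n : (forall k, 0 <= a k) -> (m <= n)%nat -> psum a m <= psum a n.
Proof.
  intros Ha H. induction H. lra. simpl. pose proof (Ha m0). lra.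
Qed.

Lemma Series_bounds a B : (forall n, 0 <= a n) -> (forall n, psum a n <= B) ->
  0 <= Series a <= B.
Proof.
  intros Ha HB.
  assert (Hex : ex_finite_lim_seq (sum_n a)).
  { apply ex_finite_lim_seq_incr with B.
    intros n. rewrite !sum_n_psum. simpl. pose proof (Ha (S n)). lra.
    intros n. rewrite sum_n_psum. auto. }
  destruct Hex as [l Hl].
  unfold Series. rewrite (is_lim_seq_unique _ _ Hl). simpl. split.
  - assert (Rbar_le (Finite 0) (Finite l)).
    { apply (is_lim_seq_le (fun _ => 0) (sum_n a)); auto.
      intros n. rewrite sum_n_psum. apply Rle_trans with (psum a 0). simpl; lra. apply psum_mono; auto; lia.
      apply is_lim_seq_const. }
    simpl in H. auto.
  - assert (Rbar_le (Finite l) (Finite B)).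
    { apply (is_lim_seq_le (sum_n a) (fun _ => B)); auto.
      intros n. rewrite sum_n_psum. auto. apply is_lim_seq_const. }
    simpl in H. auto.
Qed.

Lemma Series_lim a L : is_lim_seq (fun n => psum a n) (Finite L) -> Series a = L.
Proof.
  intros H. unfold Series.
  assert (is_lim_seq (sum_n a) (Finite L)).
  { apply is_lim_seq_incr_1 in H. eapply is_lim_seq_ext; [|exact H]. intros n. simpl. rewrite sum_n_psum. auto. }
  rewrite (is_lim_seq_unique _ _ H0). auto.
Qed.

Lemma nat_big (M : R) : exists N, forall n, (N <= n)%nat -> M < INR n.
Proof.
  pose proof is_lim_seq_INR as H. apply is_lim_seq_spec in H. destruct (H M) as [N HN]. exists N. auto.
Qed.

Lemma rho_sq n : rho n * rho n <= 1 / INR (2 * n + 1).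
Proof.
  induction n.
  - simpl. lra.
  - change (rho (S n)) with (rho n * (INR (2 * n + 1) / INR (2 * n + 2))). set (a := INR (2 * n + 1)).
    assert (Ha : 1 <= a) by (unfold a; apply (le_INR 1); lia).
    replace (INR (2 * n + 2)) with (a + 1) by (unfold a; rewrite !plus_INR; simpl; ring).
    replace (INR (2 * S n + 1)) with (a + 2).
    2:{ unfold a. replace (2 * S n + 1)%nat with ((2 * n + 1) + 2)%nat by lia. rewrite (plus_INR _ 2). simpl (INR 2). ring. }
    pose proof (rho_nonneg n).
    assert (E : rho n * (a / (a + 1)) * (rho n * (a / (a + 1))) = (rho n * rho n) * (a * a / ((a + 1) * (a + 1)))) by (field; lra).
    rewrite E.
    apply Rle_trans with ((1 / a) * (a * a / ((a + 1) * (a + 1)))).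
    + apply Rmult_le_compat_r; auto. apply Rdiv_le_0_compat; nra.
    + apply Rmult_le_reg_r with ((a + 2) * (a + 1) * (a + 1)). nra.
      field_simplify; try lra.
Qed.

Lemma rho_lim : is_lim_seq rho 0.
Proof.
  apply is_lim_seq_spec. intros eps.
  destruct (nat_big (1 / (eps * eps))) as [N HN]. exists N. intros n Hn.
  specialize (HN n Hn). pose proof (cond_pos eps) as He.
  pose proof (rho_nonneg n). pose proof (rho_sq n).
  rewrite Rminus_0_r, Rabs_pos_eq by auto.
  assert (Hn1 : INR n <= INR (2 * n + 1)) by (apply le_INR; lia).
  assert (Hpos : 0 < INR n). { apply Rle_lt_trans with (1 / (eps * eps)); auto. apply Rdiv_le_0_compat; nra. }
  assert (H1 : 1 / INR (2 * n + 1) <= 1 / INR n).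
  { unfold Rdiv. apply Rmult_le_compat_l; [lra|]. apply Rinv_le_contravar; lra. }
  assert (Hee : 0 < 1 / (eps * eps)) by (apply Rdiv_lt_0_compat; nra).
  assert (H2 : / INR n < / (1 / (eps * eps))).
  { apply Rinv_lt_contravar; auto. nra. }
  replace (/ (1 / (eps * eps))) with (eps * eps) in H2 by (field; lra).
  assert (1 / INR (2 * n + 1) < eps * eps) by (unfold Rdiv in *; lra).
  nra.
Qed.

Lemma hanc_one T : Qf 1 T = 1 /\ hanc T 1 = 1.
Proof.
  induction T as [|c IH|a IHa b IHb|a IHa b IHb c IHc].
  - rewrite Q_leaf, F_leaf. auto.
  - rewrite Q_mark, F_mark. tauto.
  - rewrite Q_n2, F_n2. destruct IHa as [-> ->], IHb as [-> _]. split; ring.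
  - rewrite Q_n3, F_n3. destruct IHa as [-> ->], IHb as [-> _], IHc as [-> _]. split; ring.
Qed.

Lemma gr_one s g u r : 0 < s -> 0 <= g -> 0 <= u -> 0 <= r -> gr s g u r 1 = 1.
Proof.
  intros Hs Hg Hu Hr. unfold gr.
  assert (Hgt : forall n, gterm s g u r 1 n = Pn s g u r n - Pn s g u r (S n)).
  { intros n. rewrite gterm_eq, Pn_S by auto. unfold Pn. rewrite <- Epath_minus.
    apply Epath_ext_in. intros. rewrite (proj2 (hanc_one T)). ring. }
  assert (Hps : forall N, psum (gterm s g u r 1) N = 1 - Pn s g u r N).
  { induction N. simpl. rewrite Pn_0. ring. simpl. rewrite IHN, Hgt. ring. }
  apply Series_lim.
  apply is_lim_seq_ext with (fun N => 1 - Pn s g u r N). intros; rewrite Hps; auto.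
  assert (HL : is_lim_seq (fun N => 1 - Pn s g u r N) (1 - 0)).
  2:{ rewrite Rminus_0_r in HL. exact HL. }
  apply is_lim_seq_minus'. apply is_lim_seq_const.
  apply is_lim_seq_le_le with (fun _ => 0) (fun N => exp ((s + g + u) * r) * rho N).
  - intros N. unfold Pn. split.
    + apply Rle_trans with (Epath s g u N (fun _ _ => 0)); [rewrite (Epath_const s g u N) by auto; lra|].
      apply Epath_le; auto. intros w rs T Hin. pose proof (hypo_bounds rs (rates_pos _ _ _ _ _ _ _ Hs Hg Hu Hin) r Hr); lra.
    + apply Rle_trans with (Epath s g u N (fun _ _ => exp ((s + g + u) * r) * rho N)); [|rewrite (Epath_const s g u N) by auto; lra].
      apply Epath_le; auto. intros w rs T Hin.
      destruct (paths_inv s g u N Hs Hg Hu w rs T Hin) as (_ & _ & _ & _ & Hpr).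
      apply Rle_trans with (exp ((s + g + u) * r) * prodf (s + g + u) rs).
      apply hypo_chernoff; auto. lra. exact (rates_pos _ _ _ _ _ _ _ Hs Hg Hu Hin).
      apply Rmult_le_compat_l; [left; apply exp_pos | exact Hpr].
  - apply is_lim_seq_const.
  - replace (Finite 0) with (Rbar_mult (exp ((s + g + u) * r)) 0) by (simpl; f_equal; ring).
    apply is_lim_seq_scal_l. apply rho_lim.
Qed.

Fixpoint pif (b : R) (n : nat) : R :=
  match n with O => 1 | S m => pif b m * (1 - b / INR (2 * m + 1)) end.

Lemma INR_2m1 m : 1 <= INR (2 * m + 1).
Proof. apply (le_INR 1). lia. Qed.

Lemma div_le_1 b x : 1 <= x -> b <= 1 -> b / x <= 1.
Proof.
  intros Hx Hb. apply Rmult_le_reg_r with x; [lra|]. unfold Rdiv. rewrite Rmult_assoc, Rinv_l by lra. lra.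
Qed.

Lemma div_le_1' a x : 0 < x -> a <= x -> a / x <= 1.
Proof.
  intros Hx Ha. apply Rmult_le_reg_r with x; [lra|]. unfold Rdiv. rewrite Rmult_assoc, Rinv_l by lra. lra.
Qed.

Lemma pif_nonneg b n : 0 <= b <= 1 -> 0 <= pif b n.
Proof.
  intros Hb. induction n; cbn [pif psum]; [lra|]. apply Rmult_le_pos; auto.
  pose proof (INR_2m1 n). assert (b / INR (2 * n + 1) <= 1).
  { apply div_le_1; lra. } lra.
Qed.

Lemma pif_exp b n : 0 <= b <= 1 -> pif b n <= exp (- b * psum (fun k => 1 / INR (2 * k + 1)) n).
Proof.
  intros Hb. induction n; cbn [pif psum].
  - rewrite Rmult_0_r, exp_0. lra.
  - replace (- b * (psum (fun k => 1 / INR (2 * k + 1)) n + 1 / INR (2 * n + 1)))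
      with (- b * psum (fun k => 1 / INR (2 * k + 1)) n + - (b / INR (2 * n + 1))) by (unfold Rdiv; ring).
    rewrite exp_plus.
    pose proof (INR_2m1 n). assert (b / INR (2 * n + 1) <= 1).
    { apply div_le_1; lra. }
    pose proof (exp_ineq1_le (- (b / INR (2 * n + 1)))).
    apply Rmult_le_compat; auto. apply pif_nonneg; auto. lra.
Qed.

Lemma harm_exp n : INR n + 1 <= exp (psum (fun k => 1 / INR (k + 1)) n).
Proof.
  induction n.
  - simpl. rewrite exp_0. lra.
  - cbn [psum]. rewrite exp_plus. rewrite S_INR.
    set (x := INR n). assert (Hx : 0 <= x) by apply pos_INR.
    replace (INR (n + 1)) with (x + 1) by (rewrite plus_INR; simpl; unfold x; ring).
    pose proof (exp_ineq1_le (1 / (x + 1))).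
    apply Rle_trans with ((x + 1) * (1 + 1 / (x + 1))).
    + right. field. lra.
    + apply Rmult_le_compat; auto. lra.
      assert (0 < 1 / (x + 1)) by (apply Rdiv_lt_0_compat; lra). lra.
Qed.

Lemma harm_cmp n : (1 / 2) * psum (fun k => 1 / INR (k + 1)) n <= psum (fun k => 1 / INR (2 * k + 1)) n.
Proof.
  induction n; cbn [pif psum]. lra.
  assert (Hn : 1 <= INR (n + 1)) by (apply (le_INR 1); lia).
  assert (1 / 2 * (1 / INR (n + 1)) <= 1 / INR (2 * n + 1)).
  { replace (INR (2 * n + 1)) with (2 * INR (n + 1) - 1) by (rewrite !plus_INR, mult_INR; simpl; ring).
    apply Rmult_le_reg_r with (2 * INR (n + 1) * (2 * INR (n + 1) - 1)). nra.
    field_simplify; try lra. }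
  lra.
Qed.

Lemma pif_small b eps : 0 < b <= 1 -> 0 < eps -> exists N, pif b N < eps.
Proof.
  intros Hb He.
  set (K := (2 / b) * (- ln eps)).
  destruct (nat_big (exp K)) as [N HN]. exists N. specialize (HN N (Nat.le_refl N)).
  set (h := psum (fun k => 1 / INR (k + 1)) N).
  assert (Hh : K < h). { apply exp_lt_inv. pose proof (harm_exp N). fold h in H. lra. }
  apply Rle_lt_trans with (exp (- b * psum (fun k => 1 / INR (2 * k + 1)) N)). apply pif_exp; lra.
  rewrite <- (exp_ln eps He). apply exp_increasing.
  pose proof (harm_cmp N). fold h in H.
  assert (ln eps = - (b / 2) * K) by (unfold K; field; lra).
  rewrite H0. nra.
Qed.

Definition Gn s g u r y n := Epath s g u n (fun rs T => hypoCDF rs r * hanc T y).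
Definition Dn s g u y n := Epath s g u n (fun _ T => hanc T y).


Lemma hanc_step s g u y rs T (Phi : list R -> R) : 0 < s -> 0 <= g -> 0 <= u -> drift s g u y = 0 ->
  (1 <= nleaves T)%nat ->
  lsum (map (fun p => fst p / totrate s g u T * (Phi (rs ++ [totrate s g u T]) * hanc (snd p) y)) (trans s g u T))
  = Phi (rs ++ [totrate s g u T]) * (1 - kap s g y / totrate s g u T) * hanc T y.
Proof.
  intros Hs Hg Hu Hd Hn.
  pose proof (totrate_pos s g u T Hs Hg Hu Hn).
  rewrite (lsum_ext_in _ (fun p => (Phi (rs ++ [totrate s g u T]) / totrate s g u T) * (fst p * hanc (snd p) y)))
    by (intros; unfold Rdiv; ring).
  rewrite lsum_scal, TB by auto. unfold totrate in *. field. split; apply Rgt_not_eq; [apply (lt_INR 0); lia | lra].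
Qed.

Lemma step1 s g u r y n : 0 < s -> 0 <= g -> 0 <= u -> 0 <= r -> 0 <= y <= 1 -> drift s g u y = 0 ->
  0 <= kap s g y ->
  gterm s g u r y n + Gn s g u r y (S n) <= Gn s g u r y n.
Proof.
  intros Hs Hg Hu Hr Hy Hd Hk. unfold Gn. rewrite gterm_eq, Epath_S.
  rewrite (Epath_ext_in s g u n (fun rs T => lsum _)
     (fun rs T => hypoCDF (rs ++ [totrate s g u T]) r * (1 - kap s g y / totrate s g u T) * hanc T y)).
  2:{ intros w rs T Hin. destruct (paths_inv s g u n Hs Hg Hu w rs T Hin) as (_ & _ & _ & Hn & _).
      apply (hanc_step s g u y rs T (fun l => hypoCDF l r)); auto. lia. }
  rewrite <- Epath_plus. apply Epath_le; auto. intros w rs T Hin.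
  destruct (paths_inv s g u n Hs Hg Hu w rs T Hin) as (_ & _ & _ & Hn & _).
  pose proof (totrate_pos s g u T Hs Hg Hu ltac:(lia)).
  pose proof (hypo_bounds (rs ++ [totrate s g u T]) ltac:(apply List.Forall_app; split; [exact (rates_pos _ _ _ _ _ _ _ Hs Hg Hu Hin) | constructor; auto]) r Hr).
  pose proof (hanc_bounds T y Hy).
  assert (0 <= kap s g y / totrate s g u T) by (apply Rdiv_le_0_compat; lra).
  assert (0 <= hypoCDF (rs ++ [totrate s g u T]) r * (kap s g y / totrate s g u T) * hanc T y).
  { apply Rmult_le_pos; [apply Rmult_le_pos|]; lra. }
  nra.
Qed.

Lemma step2 s g u r y n : 0 < s -> 0 <= g -> 0 <= u -> 0 <= r -> 0 <= y <= 1 ->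
  gterm s g u r y n <= Pn s g u r n - Pn s g u r (S n).
Proof.
  intros Hs Hg Hu Hr Hy. rewrite gterm_eq, Pn_S by auto. unfold Pn. rewrite <- Epath_minus.
  apply Epath_le; auto. intros w rs T Hin.
  destruct (paths_inv s g u n Hs Hg Hu w rs T Hin) as (_ & _ & _ & Hn & _).
  pose proof (hypo_app_le rs (totrate s g u T) (rates_pos _ _ _ _ _ _ _ Hs Hg Hu Hin) (totrate_pos s g u T Hs Hg Hu ltac:(lia)) r Hr).
  pose proof (hanc_bounds T y Hy). nra.
Qed.

Lemma step3 s g u y n : 0 < s -> 0 <= g -> 0 <= u -> 0 <= y <= 1 -> drift s g u y = 0 -> 0 <= kap s g y ->
  Dn s g u y (S n) <= (1 - kap s g y / ((s + g + u) * INR (2 * n + 1))) * Dn s g u y n.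
Proof.
  intros Hs Hg Hu Hy Hd Hk. unfold Dn. rewrite Epath_S.
  rewrite (Epath_ext_in s g u n (fun rs T => lsum _)
     (fun rs T => (fun _ => 1) (rs ++ [totrate s g u T]) * (1 - kap s g y / totrate s g u T) * hanc T y)).
  2:{ intros w rs T Hin. destruct (paths_inv s g u n Hs Hg Hu w rs T Hin) as (_ & _ & _ & Hn & _).
      rewrite <- (hanc_step s g u y rs T (fun _ => 1)); auto. apply lsum_ext_in. intros; ring. lia. }
  rewrite <- Epath_scal. apply Epath_le; auto. intros w rs T Hin.
  destruct (paths_inv s g u n Hs Hg Hu w rs T Hin) as (_ & _ & _ & Hn & _).
  pose proof (hanc_bounds T y Hy).
  assert (kap s g y / ((s + g + u) * INR (2 * n + 1)) <= kap s g y / totrate s g u T).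
  { unfold totrate. unfold Rdiv. apply Rmult_le_compat_l; auto.
    assert (1 <= INR (nleaves T)) by (apply (le_INR 1); lia).
    apply Rinv_le_contravar. nra. apply Rmult_le_compat_l. lra. apply le_INR; lia. }
  nra.
Qed.

Lemma gr_bound s g u y r N : 0 < s -> 0 <= g -> 0 < u -> 0 < y < 1 -> drift s g u y = 0 -> 0 <= r ->
  0 <= gr s g u r y <= 3 ^ N * exp (- ((s + g + u) / 2 * r)) + y * pif (kap s g y / (s + g + u)) N.
Proof.
  intros Hs Hg Hu Hy Hd Hr.
  assert (Hy' : 0 <= y <= 1) by lra.
  assert (Hk : 0 < kap s g y).
  { unfold kap. assert (0 <= g * (1 - y)) by (apply Rmult_le_pos; lra). apply Rmult_lt_0_compat; lra. }
  assert (Hkc : kap s g y <= s + g).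
  { unfold kap. assert (g * (1 - y) <= g) by nra. assert (0 <= g * (1 - y)) by (apply Rmult_le_pos; lra). nra. }
  set (c := s + g + u). set (b := kap s g y / c).
  assert (Hb : 0 < b <= 1).
  { unfold b, c. split. apply Rdiv_lt_0_compat; lra. apply div_le_1'; lra. }
  assert (HD : forall n, Dn s g u y n <= y * pif b n).
  { induction n.
    - unfold Dn, Epath. simpl. rewrite F_leaf. lra.
    - eapply Rle_trans. apply step3; auto. lra. lra.
      replace (kap s g y / ((s + g + u) * INR (2 * n + 1))) with (b / INR (2 * n + 1)).
      2:{ unfold b, c. field. pose proof (INR_2m1 n). split; apply Rgt_not_eq; lra. }
      cbn [pif]. pose proof (INR_2m1 n).
      assert (b / INR (2 * n + 1) <= 1) by (apply div_le_1; lra).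
      assert (0 <= 1 - b / INR (2 * n + 1)) by lra.
      apply Rle_trans with ((1 - b / INR (2 * n + 1)) * (y * pif b n)).
      apply Rmult_le_compat_l; auto. right; ring. }
  assert (HG : forall n, 0 <= Gn s g u r y n <= Dn s g u y n).
  { intros n. unfold Gn, Dn. split.
    - apply Rle_trans with (Epath s g u n (fun _ _ => 0)); [rewrite (Epath_const s g u n) by lra; lra|].
      apply Epath_le; try lra. intros w rs T Hin.
      pose proof (hypo_bounds rs (rates_pos _ _ _ _ _ _ _ Hs Hg (Rlt_le _ _ Hu) Hin) r Hr).
      pose proof (hanc_bounds T y Hy'). nra.
    - apply Epath_le; try lra. intros w rs T Hin.
      pose proof (hypo_bounds rs (rates_pos _ _ _ _ _ _ _ Hs Hg (Rlt_le _ _ Hu) Hin) r Hr).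
      pose proof (hanc_bounds T y Hy'). nra. }
  assert (HP : 1 - Pn s g u r N <= 3 ^ N * exp (- ((s + g + u) / 2 * r))).
  { unfold Pn. rewrite <- (Epath_const s g u N 1) at 1 by lra. rewrite <- Epath_minus.
    apply Rle_trans with (Epath s g u N (fun _ _ => 3 ^ N * exp (- ((s + g + u) / 2 * r))));
      [|rewrite (Epath_const s g u N) by lra; lra].
    apply Epath_le; try lra. intros w rs T Hin.
    destruct (paths_inv s g u N Hs Hg ltac:(lra) w rs T Hin) as (_ & Hl & Hf & _).
    rewrite <- Hl. apply hypo_tail; auto. lra.
    eapply List.Forall_impl; [|exact Hf]. intros; simpl in *; lra. }
  assert (L2 : forall M, psum (gterm s g u r y) M <= 1 - Pn s g u r M).
  { induction M. simpl. rewrite Pn_0. lra.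
    cbn [psum]. pose proof (step2 s g u r y M Hs Hg ltac:(lra) Hr Hy'). lra. }
  assert (L1 : forall k, psum (gterm s g u r y) (N + k) - psum (gterm s g u r y) N + Gn s g u r y (N + k) <= Gn s g u r y N).
  { induction k. rewrite Nat.add_0_r. lra.
    rewrite Nat.add_succ_r. cbn [psum].
    pose proof (step1 s g u r y (N + k) Hs Hg ltac:(lra) Hr Hy' Hd ltac:(lra)). lra. }
  assert (Hpos : forall n, 0 <= gterm s g u r y n) by (intros; apply gterm_nonneg; lra).
  assert (HM : forall M, psum (gterm s g u r y) M <= 3 ^ N * exp (- ((s + g + u) / 2 * r)) + y * pif b N).
  { intros M. destruct (HG N). specialize (HD N).
    destruct (Nat.le_ge_cases M N) as [HMN|HMN].
    - pose proof (psum_mono _ M N Hpos HMN). pose proof (L2 N). lra.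
    - destruct (Nat.le_exists_sub N M HMN) as [k [-> _]]. rewrite Nat.add_comm.
      pose proof (L1 k). pose proof (L2 N). destruct (HG (N + k)%nat). lra. }
  unfold gr. apply Series_bounds; auto.
Qed.

Lemma gr_fixed s g u y : 0 < s -> 0 <= g -> 0 < u -> 0 < y < 1 -> drift s g u y = 0 ->
  is_lim (fun r => gr s g u r y) p_infty 0.
Proof.
  intros Hs Hg Hu Hy Hd. apply is_lim_spec. intros eps. simpl.
  pose proof (cond_pos eps) as He.
  assert (Hk : 0 < kap s g y).
  { unfold kap. assert (0 <= g * (1 - y)) by (apply Rmult_le_pos; lra). apply Rmult_lt_0_compat; lra. }
  assert (Hkc : kap s g y <= s + g).
  { unfold kap. assert (g * (1 - y) <= g) by nra. assert (0 <= g * (1 - y)) by (apply Rmult_le_pos; lra). nra. }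
  set (b := kap s g y / (s + g + u)).
  assert (Hb : 0 < b <= 1).
  { unfold b. split. apply Rdiv_lt_0_compat; lra. apply div_le_1'; lra. }
  destruct (pif_small b (eps / 2) Hb ltac:(lra)) as [N HN].
  set (c := s + g + u).
  set (A := 3 ^ N).
  assert (HA : 0 < A) by (unfold A; apply pow_lt; lra).
  exists (Rmax 0 (- (2 / c) * ln (eps / (2 * A)))).
  intros r Hr.
  assert (Hr0 : 0 <= r) by (pose proof (Rmax_l 0 (- (2 / c) * ln (eps / (2 * A)))); lra).
  assert (Hr1 : - (2 / c) * ln (eps / (2 * A)) < r) by (pose proof (Rmax_r 0 (- (2 / c) * ln (eps / (2 * A)))); lra).
  destruct (gr_bound s g u y r N Hs Hg Hu Hy Hd Hr0) as [H1 H2].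
  rewrite Rminus_0_r, Rabs_pos_eq by auto.
  assert (Hc : 0 < c) by (unfold c; lra).
  assert (Hexp : exp (- (c / 2 * r)) < eps / (2 * A)).
  { rewrite <- (exp_ln (eps / (2 * A))) by (apply Rdiv_lt_0_compat; lra).
    apply exp_increasing.
    apply Rmult_lt_compat_l with (r := c / 2) in Hr1; [|lra].
    replace (c / 2 * (- (2 / c) * ln (eps / (2 * A)))) with (- ln (eps / (2 * A))) in Hr1 by (field; lra).
    lra. }
  pose proof (pif_nonneg b N ltac:(lra)).
  assert (A * exp (- (c / 2 * r)) < eps / 2).
  { apply Rmult_lt_compat_l with (r := A) in Hexp; auto.
    replace (A * (eps / (2 * A))) with (eps / 2) in Hexp by (field; lra). lra. }
  fold c A in H2. change (kap s g y / c) with b in H2. assert (y * pif b N <= pif b N) by nra. lra.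
Qed.

Lemma cont_pt_of (f : R -> R) x : continuous f x -> continuity_pt f x.
Proof. intros H. apply continuity_pt_filterlim. exact H. Qed.

Definition mpos (t : R) : R := (t + Rabs t) / 2.

Lemma mpos_cont x : continuous mpos x.
Proof.
  unfold mpos.
  apply (continuous_ext (fun t => (/2) * (t + Rabs t))). intros; simpl; unfold Rdiv; ring.
  apply (continuous_mult (fun _ => /2) (fun t => t + Rabs t)). apply continuous_const.
  apply (continuous_plus (fun t => t) Rabs). apply continuous_id. apply continuous_Rabs.
Qed.

Lemma mpos_nonneg t : 0 <= mpos t.
Proof. unfold mpos. pose proof (Rle_abs (- t)). rewrite Rabs_Ropp in H. lra. Qed.

Lemma mpos_id t : 0 <= t -> mpos t = t.
Proof. intros H. unfold mpos. rewrite Rabs_pos_eq by auto. field. Qed.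

Lemma ode_factor (z q : R -> R) (a : R) :
  (forall x, continuous q x) ->
  (forall t, 0 <= t -> is_derive z t ((z t - a) * q (z t))) ->
  forall t, 0 <= t -> exists E, 0 < E /\ z t - a = (z 0 - a) * E.
Proof.
  intros Hq Hz t Ht.
  assert (Hzc : forall t, 0 <= t -> continuous z t).
  { intros τ Hτ. apply exd_cont. eexists. apply Hz; auto. }
  set (gq := fun τ => q (z (mpos τ))).
  assert (Hg : forall x, continuous gq x).
  { intros x. unfold gq. apply (continuous_comp (fun τ => z (mpos τ)) q).
    apply (continuous_comp mpos z). apply mpos_cont. apply Hzc, mpos_nonneg. apply Hq. }
  set (Q := fun τ => RInt gq 0 τ).
  assert (HQ : forall x, is_derive Q x (gq x)).
  { intros x. apply (is_derive_RInt gq Q 0 x).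
    apply filter_forall. intros b. apply (RInt_correct (V:=R_CompleteNormedModule)). apply ex_RInt_cont; auto.
    apply Hg. }
  set (phi := fun τ => (z τ - a) * exp (- Q τ)).
  assert (Hphi : forall x, 0 <= x -> is_derive phi x 0).
  { intros x Hx. unfold phi.
    evar (l : R).
    assert (is_derive (fun τ => (z τ - a) * exp (- Q τ)) x l).
    { unfold l. auto_derive. split. eexists; apply Hz; auto. split; auto. eexists; apply HQ. reflexivity. }
    replace 0 with l. auto. unfold l.
    replace (Derive (fun x => z x) x) with ((z x - a) * q (z x)) by (symmetry; apply is_derive_unique; apply Hz; auto).
    replace (Derive (fun x => Q x) x) with (gq x) by (symmetry; apply is_derive_unique; apply HQ).
    unfold gq. rewrite mpos_id by auto. ring. }
  destruct (MVT_gen phi 0 t (fun _ => 0)) as [c [_ Hc]].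
  - intros x Hx. rewrite Rmin_left in Hx by auto. apply Hphi. lra.
  - intros x Hx. rewrite Rmin_left, Rmax_right in Hx by auto. apply cont_pt_of. apply exd_cont.
    eexists. apply Hphi. lra.
  - exists (exp (Q t)). split. apply exp_pos.
    unfold phi in Hc. rewrite Rmult_0_l in Hc.
    assert (HQ0 : Q 0 = 0). { unfold Q. rewrite RInt_point. reflexivity. }
    rewrite HQ0, Ropp_0, exp_0 in Hc.
    assert (E : (z t - a) * exp (- Q t) = z 0 - a) by lra.
    rewrite <- E. rewrite Rmult_assoc, <- exp_plus. replace (- Q t + Q t) with 0 by ring.
    rewrite exp_0. ring.
Qed.

Lemma barrier (z q : R -> R) (a : R) :
  (forall x, continuous q x) ->
  (forall t, 0 <= t -> is_derive z t ((z t - a) * q (z t))) ->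
  forall t, 0 <= t ->
   (z 0 < a -> z t < a) /\ (a < z 0 -> a < z t) /\ (z 0 = a -> z t = a).
Proof.
  intros Hq Hz t Ht. destruct (ode_factor z q a Hq Hz t Ht) as [E [HE Ht']].
  repeat split; intros; nra.
Qed.

Lemma incr_lim (z f : R -> R) (b : R) :
  (forall x, continuous f x) ->
  (forall t, 0 <= t -> is_derive z t (f (z t))) ->
  (forall t, 0 <= t -> z t < b) ->
  (forall t, 0 <= t -> 0 < f (z t)) ->
  (forall x, z 0 <= x < b -> 0 < f x) ->
  is_lim z p_infty b.
Proof.
  intros Hf Hz Hb Hpos Hreg.
  assert (Hzc : forall t, 0 <= t -> continuous z t).
  { intros τ Hτ. apply exd_cont. eexists. apply Hz; auto. }
  assert (Hmvt : forall t1 t2, 0 <= t1 -> t1 <= t2 -> exists c, t1 <= c <= t2 /\ z t2 - z t1 = f (z c) * (t2 - t1)).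
  { intros t1 t2 H1 H2. destruct (MVT_gen z t1 t2 (fun τ => f (z τ))) as [c [Hc E]].
    - intros x Hx. rewrite Rmin_left in Hx by auto. apply Hz. lra.
    - intros x Hx. rewrite Rmin_left, Rmax_right in Hx by auto. apply cont_pt_of, Hzc. lra.
    - rewrite Rmin_left, Rmax_right in Hc by auto. exists c. split; auto. }
  assert (Hmono : forall t1 t2, 0 <= t1 -> t1 <= t2 -> z t1 <= z t2).
  { intros t1 t2 H1 H2. destruct (Hmvt t1 t2 H1 H2) as [c [Hc E]]. pose proof (Hpos c ltac:(lra)). nra. }
  assert (Hreach : forall eps, 0 < eps -> exists T, 0 <= T /\ b - eps < z T).
  { intros eps He. destruct (classic (exists T, 0 <= T /\ b - eps < z T)) as [H|H]; auto.
    exfalso.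
    assert (Hall : forall T, 0 <= T -> z T <= b - eps).
    { intros T HT. destruct (Rle_lt_dec (z T) (b - eps)); auto. exfalso. apply H. exists T; auto. }
    pose proof (Hall 0 (Rle_refl 0)) as H0.
    destruct (continuity_ab_min f (z 0) (b - eps) H0) as [mx [Hmx Hmxr]].
    { intros c Hc. apply cont_pt_of, Hf. }
    set (m := f mx). assert (Hm : 0 < m) by (apply Hreg; lra).
    set (T := (b - eps - z 0) / m + 1).
    assert (HT : 0 <= T). { unfold T. assert (0 <= (b - eps - z 0) / m) by (apply Rdiv_le_0_compat; lra). lra. }
    destruct (Hmvt 0 T (Rle_refl 0) HT) as [c [Hc E]].
    assert (Hzc' : z 0 <= z c <= b - eps). { split. apply Hmono; lra. apply Hall; lra. }
    pose proof (Hmx (z c) Hzc'). fold m in H1.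
    pose proof (Hall T HT).
    assert (z T - z 0 >= m * T) by (rewrite Rminus_0_r in E; nra).
    assert (m * T = b - eps - z 0 + m) by (unfold T; field; lra). lra. }
  apply is_lim_spec. intros eps. simpl.
  destruct (Hreach eps (cond_pos eps)) as [T [HT HzT]].
  exists T. intros x Hx. pose proof (Hmono T x HT ltac:(lra)). pose proof (Hb x ltac:(lra)).
  rewrite Rabs_left1 by lra. lra.
Qed.

Lemma decr_lim (z f : R -> R) (b : R) :
  (forall x, continuous f x) ->
  (forall t, 0 <= t -> is_derive z t (f (z t))) ->
  (forall t, 0 <= t -> b < z t) ->
  (forall t, 0 <= t -> f (z t) < 0) ->
  (forall x, b < x <= z 0 -> f x < 0) ->
  is_lim z p_infty b.
Proof.
  intros Hf Hz Hb Hneg Hreg.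
  assert (H : is_lim (fun t => - z t) p_infty (- b)).
  { apply (incr_lim (fun t => - z t) (fun x => - f (- x)) (- b)).
    - intros x. apply (continuous_comp (fun x => - x) (fun y => - f y)). apply exd_cont; auto_derive; auto.
      apply (continuous_opp f). apply Hf.
    - intros t Ht. rewrite Ropp_involutive. apply (is_derive_opp z t (f (z t))). auto.
    - intros t Ht. specialize (Hb t Ht). lra.
    - intros t Ht. rewrite Ropp_involutive. specialize (Hneg t Ht). lra.
    - intros x Hx. assert (f (- x) < 0) by (apply Hreg; lra). lra. }
  apply is_lim_opp in H. simpl in H. rewrite Ropp_involutive in H.
  eapply is_lim_ext; [|exact H]. intros; simpl; ring.
Qed.

Definition Pq (s g u x : R) : R := g * x * x - (s + g) * x + u.

Lemma drift_P s g u x : drift s g u x = (1 - x) * Pq s g u x.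
Proof. unfold drift, Pq. ring. Qed.

Lemma drift_f1 s g u x : drift s g u x = (x - 1) * (- Pq s g u x).
Proof. rewrite drift_P. ring. Qed.

Lemma drift_fa s g u a x : Pq s g u a = 0 ->
  drift s g u x = (x - a) * ((1 - x) * (g * (x + a) - (s + g))).
Proof.
  intros H. rewrite drift_P. unfold Pq in *.
  replace u with (- (g * a * a) + (s + g) * a) by lra. ring.
Qed.

Lemma drift_cont s g u x : continuous (drift s g u) x.
Proof. apply exd_cont. unfold drift. auto_derive. auto. Qed.


Lemma sol_facts s g u (y : R -> R -> R) y0 : IsSolution s g u y -> 0 <= y0 <= 1 ->
  y y0 0 = y0 /\ forall t, 0 <= t -> is_derive (y y0) t (drift s g u (y y0 t)).
Proof. intros H Hy. apply H; auto. Qed.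

Lemma bar_one s g u y y0 : IsSolution s g u y -> 0 <= y0 < 1 -> forall t, 0 <= t -> y y0 t < 1.
Proof.
  intros Hy Hy0 t Ht. destruct (sol_facts s g u y y0 Hy ltac:(lra)) as [H0 Hd].
  destruct (barrier (y y0) (fun x => - Pq s g u x) 1) with (t := t) as [H1 _]; auto.
  - intros x. apply exd_cont. unfold Pq. auto_derive. auto.
  - intros τ Hτ. rewrite <- drift_f1. auto.
  - apply H1. lra.
Qed.

Lemma bar_root s g u y y0 a : IsSolution s g u y -> 0 <= y0 <= 1 -> Pq s g u a = 0 -> forall t, 0 <= t ->
  (y0 < a -> y y0 t < a) /\ (a < y0 -> a < y y0 t) /\ (y0 = a -> y y0 t = a).
Proof.
  intros Hy Hy0 Ha t Ht. destruct (sol_facts s g u y y0 Hy Hy0) as [H0 Hd].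
  assert (B : (y y0 0 < a -> y y0 t < a) /\ (a < y y0 0 -> a < y y0 t) /\ (y y0 0 = a -> y y0 t = a)).
  { apply (barrier (y y0) (fun x => (1 - x) * (g * (x + a) - (s + g))) a); auto.
    - intros x. apply exd_cont. auto_derive. auto.
    - intros τ Hτ. rewrite <- (drift_fa s g u a) by auto. auto. }
  rewrite H0 in B. exact B.
Qed.

Lemma lim_one s g u y y0 : IsSolution s g u y -> 0 <= y0 < 1 ->
  (forall t, 0 <= t -> 0 < Pq s g u (y y0 t)) -> (forall x, y0 <= x < 1 -> 0 < Pq s g u x) ->
  is_lim (y y0) p_infty 1.
Proof.
  intros Hy Hy0 HP HP2. destruct (sol_facts s g u y y0 Hy ltac:(lra)) as [H0 Hd].
  apply (incr_lim (y y0) (drift s g u) 1); auto.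
  - apply drift_cont.
  - apply (bar_one s g u); auto.
  - intros t Ht. rewrite drift_P. pose proof (bar_one s g u y y0 Hy Hy0 t Ht). pose proof (HP t Ht). nra.
  - intros x Hx. rewrite drift_P. rewrite H0 in Hx. pose proof (HP2 x Hx). nra.
Qed.

Lemma lim_below s g u y y0 a : IsSolution s g u y -> 0 <= y0 < a -> a < 1 -> Pq s g u a = 0 ->
  (forall x, x < a -> 0 < Pq s g u x) -> is_lim (y y0) p_infty a.
Proof.
  intros Hy Hy0 Ha1 Ha HP. destruct (sol_facts s g u y y0 Hy ltac:(lra)) as [H0 Hd].
  assert (Hb : forall t, 0 <= t -> y y0 t < a) by (intros; apply (bar_root s g u y y0 a); auto; lra).
  apply (incr_lim (y y0) (drift s g u) a); auto.
  - apply drift_cont.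
  - intros t Ht. rewrite drift_P. pose proof (Hb t Ht). pose proof (HP (y y0 t) H). nra.
  - intros x Hx. rewrite drift_P. pose proof (HP x ltac:(lra)). nra.
Qed.

Lemma lim_above s g u y y0 a U : IsSolution s g u y -> a < y0 < U -> 0 <= y0 -> U <= 1 -> Pq s g u a = 0 ->
  (forall t, 0 <= t -> y y0 t < U) ->
  (forall x, a < x < U -> Pq s g u x < 0) -> is_lim (y y0) p_infty a.
Proof.
  intros Hy Hy0 Hy00 HU Ha HbU HP. destruct (sol_facts s g u y y0 Hy ltac:(lra)) as [H0 Hd].
  assert (Hb : forall t, 0 <= t -> a < y y0 t) by (intros; apply (bar_root s g u y y0 a); auto; lra).
  apply (decr_lim (y y0) (drift s g u) a); auto.
  - apply drift_cont.
  - intros t Ht. rewrite drift_P. pose proof (Hb t Ht). pose proof (HbU t Ht).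
    pose proof (HP (y y0 t) ltac:(lra)). nra.
  - intros x Hx. rewrite drift_P. rewrite H0 in Hx. pose proof (HP x ltac:(lra)). nra.
Qed.

Lemma lim_eq s g u y y0 : IsSolution s g u y -> 0 <= y0 <= 1 ->
  (forall t, 0 <= t -> y y0 t = y0) -> is_lim (y y0) p_infty y0.
Proof.
  intros Hy Hy0 Hc. apply is_lim_spec. intros eps. simpl. exists 0. intros x Hx.
  rewrite Hc by lra. rewrite Rminus_diag, Rabs_R0. apply cond_pos.
Qed.

Lemma ginf_one s g u y y0 : 0 < s -> 0 <= g -> 0 < u -> is_lim (y y0) p_infty 1 -> ginf_yinf s g u y y0 1.
Proof.
  intros Hs Hg Hu Hl. exists 1. split; auto.
  apply is_lim_spec. intros eps. simpl. exists 0. intros x Hx.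
  rewrite gr_one by lra. rewrite Rminus_diag, Rabs_R0. apply cond_pos.
Qed.

Lemma ginf_zero s g u y y0 a : 0 < s -> 0 <= g -> 0 < u -> 0 < a < 1 -> Pq s g u a = 0 ->
  is_lim (y y0) p_infty a -> ginf_yinf s g u y y0 0.
Proof.
  intros Hs Hg Hu Ha HP Hl. exists a. split; auto.
  apply gr_fixed; auto. rewrite drift_P, HP. ring.
Qed.

Lemma Pq_cont s g u : continuity (fun x => - Pq s g u x).
Proof. intros x. apply cont_pt_of. apply exd_cont. unfold Pq. auto_derive. auto. Qed.

Lemma case_i_root s g u : 0 < s -> 0 <= g -> 0 < u -> (u < s \/ (u = s /\ s < g)) ->
  exists b, 0 < b < 1 /\ Pq s g u b = 0 /\ (forall x, x < b -> 0 < Pq s g u x) /\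
            (forall x, b < x < 1 -> Pq s g u x < 0).
Proof.
  intros Hs Hg Hu Hc.
  assert (Hex : exists b, 0 < b < 1 /\ Pq s g u b = 0).
  { destruct Hc as [Hc|[Hc1 Hc2]].
    - destruct (IVT (fun x => - Pq s g u x) 0 1 (Pq_cont s g u) ltac:(lra)) as [b [Hb1 Hb2]].
      + unfold Pq. lra.
      + unfold Pq. lra.
      + exists b. assert (Pq s g u b = 0) by lra. split; auto.
        split. destruct (Req_dec b 0); [subst; unfold Pq in H; lra | lra].
        destruct (Req_dec b 1); [subst; unfold Pq in H; lra | lra].
    - exists (s / g). split. split. apply Rdiv_lt_0_compat; lra.
      apply Rmult_lt_reg_r with g. lra. unfold Rdiv. rewrite Rmult_assoc, Rinv_l by lra. lra.
      unfold Pq. subst u. field. lra. }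
  destruct Hex as [b [Hb Hpb]]. exists b. split; auto. split; auto.
  assert (Hfac : forall x, Pq s g u x = (x - b) * (g * (x + b) - (s + g))).
  { intros x. unfold Pq in *. replace u with (- (g * b * b) + (s + g) * b) by lra. ring. }
  assert (HL1 : g * b - s <= 0).
  { assert (Pq s g u 1 = (1 - b) * (g * b - s)) by (rewrite Hfac; ring).
    unfold Pq at 1 in H. destruct Hc as [Hc|[Hc1 Hc2]]; nra. }
  assert (HL : forall x, x < 1 -> g * (x + b) - (s + g) < 0).
  { intros x Hx. destruct Hc as [Hc|[Hc1 Hc2]].
    - assert (Pq s g u 1 = (1 - b) * (g * b - s)) by (rewrite Hfac; ring).
      unfold Pq at 1 in H.
      assert (g * b - s < 0) by nra. nra.
    - nra. }
  split.
  - intros x Hx. rewrite Hfac. pose proof (HL x ltac:(lra)). nra.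
  - intros x Hx. rewrite Hfac. pose proof (HL x ltac:(lra)). nra.
Qed.

Lemma case_ii_pos s g u : 0 < s -> 0 <= g -> 0 < u ->
  (Rbar_lt (ucheck s g) (Finite u) \/ (g <= s /\ s <= u /\ Rbar_le (Finite u) (ucheck s g))) ->
  forall x, x < 1 -> 0 < Pq s g u x.
Proof.
  intros Hs Hg Hu Hc x Hx. destruct Hc as [Hc|[H1 [H2 _]]].
  - unfold ucheck in Hc. destruct (Req_EM_T g 0) as [E|E]; simpl in Hc; [contradiction|].
    assert (Hg' : 0 < g) by lra.
    assert (Hd : (s + g) * (s + g) < 4 * g * u).
    { apply Rmult_lt_compat_l with (r := 4 * g) in Hc; [|lra].
      replace (4 * g * (1 / g * ((s + g) / 2 * ((s + g) / 2 * 1)))) with ((s + g) * (s + g)) in Hc by (field; auto). lra. }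
    assert (4 * g * Pq s g u x = (2 * g * x - (s + g)) * (2 * g * x - (s + g)) + (4 * g * u - (s + g) * (s + g))).
    { unfold Pq. ring. }
    assert (0 <= (2 * g * x - (s + g)) * (2 * g * x - (s + g))) by apply Rle_0_sqr.
    assert (0 < 4 * g * Pq s g u x) by lra. apply (Rmult_lt_reg_l (4 * g)); lra.
  - assert (E : Pq s g u x = (u - s) + (1 - x) * ((s - g) + g * (1 - x))) by (unfold Pq; ring).
    rewrite E. assert (0 <= g * (1 - x)) by (apply Rmult_le_pos; lra).
    destruct (Req_dec g 0).
    + subst. nra.
    + assert (0 < g * (1 - x)) by (apply Rmult_lt_0_compat; lra). nra.
Qed.

Lemma case_iii_roots s g u : 0 < s -> 0 <= g -> 0 < u -> s < g -> s < u -> Rbar_le (Finite u) (ucheck s g) ->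
  let r1 := / 2 * (1 + s / g - sqrt (Defs.sigma s g u)) in
  let r2 := ybar3 s g u in
  0 < r1 <= r2 /\ r2 < 1 /\ Pq s g u r1 = 0 /\ Pq s g u r2 = 0 /\
  (forall x, Pq s g u x = g * (x - r1) * (x - r2)).
Proof.
  intros Hs Hg Hu Hsg Hsu Hc r1 r2.
  assert (Hg' : 0 < g) by lra.
  unfold ucheck in Hc. destruct (Req_EM_T g 0) as [E|E]; [lra|]. simpl in Hc.
  set (k := s / g). set (w := u / g).
  assert (Hk : 0 < k < 1). { unfold k. split. apply Rdiv_lt_0_compat; lra.
    apply Rmult_lt_reg_r with g. lra. unfold Rdiv. rewrite Rmult_assoc, Rinv_l by lra. lra. }
  assert (Hw : k < w). { unfold k, w. unfold Rdiv. apply Rmult_lt_compat_r. apply Rinv_0_lt_compat; lra. lra. }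
  assert (Hsig : Defs.sigma s g u = (1 + k) ^ 2 - 4 * w) by (unfold Defs.sigma, k, w; field; auto).
  assert (Hsig0 : 0 <= Defs.sigma s g u).
  { rewrite Hsig. apply Rmult_le_compat_l with (r := 4 / g) in Hc; [|apply Rdiv_le_0_compat; lra].
    replace (4 / g * (1 / g * ((s + g) / 2 * ((s + g) / 2 * 1)))) with ((1 + k) ^ 2) in Hc by (unfold k; field; auto).
    replace (4 / g * u) with (4 * w) in Hc by (unfold w; field; auto). lra. }
  set (q := sqrt (Defs.sigma s g u)) in *.
  assert (Hq0 : 0 <= q) by apply sqrt_pos.
  assert (Hqq : q * q = (1 + k) ^ 2 - 4 * w) by (unfold q; rewrite sqrt_sqrt; auto).
  assert (Hr1 : r1 = / 2 * (1 + k - q)) by reflexivity.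
  assert (Hr2 : r2 = / 2 * (1 + k + q)) by reflexivity.
  assert (Hfac : forall x, Pq s g u x = g * (x - r1) * (x - r2)).
  { intros x. rewrite Hr1, Hr2. unfold Pq.
    assert (Hs' : g * k = s) by (unfold k; field; auto).
    assert (Hu' : g * w = u) by (unfold w; field; auto).
    transitivity (g * x * x - (g + g * k) * x + g * w); [rewrite Hs', Hu'; ring|].
    assert (Hw' : w = ((1 + k) ^ 2 - q * q) / 4) by lra.
    rewrite Hw'. field. }
  assert (Hq1 : q < 1 + k) by nra.
  assert (Hq2 : q < 1 - k) by nra.
  split; [|split; [|split; [|split]]].
  - rewrite Hr1, Hr2. split; lra.
  - rewrite Hr2. lra.
  - rewrite Hfac. ring.
  - rewrite Hfac. ring.
  - exact Hfac.
Qed.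

Theorem corollary2p41 (s g u : R) (y : R -> R -> R)
  (hs : 0 < s) (hg : 0 <= g) (hu : 0 < u) (hy : IsSolution s g u y) :
  ginf_yinf s g u y 1 1 /\
  forall y0 : R, 0 <= y0 < 1 ->
    ((u < s \/ (u = s /\ s < g)) -> ginf_yinf s g u y y0 0) /\
    ((Rbar_lt (ucheck s g) (Finite u) \/
      (g <= s /\ s <= u /\ Rbar_le (Finite u) (ucheck s g))) ->
       ginf_yinf s g u y y0 1) /\
    ((s < g /\ s < u /\ Rbar_le (Finite u) (ucheck s g)) ->
       (y0 <= ybar3 s g u -> ginf_yinf s g u y y0 0) /\
       (ybar3 s g u < y0 -> ginf_yinf s g u y y0 1)).
Proof.
  split.
  - apply ginf_one; auto.
    apply (lim_eq s g u); auto. lra.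
    intros t Ht. destruct (sol_facts s g u y 1 hy ltac:(lra)) as [H0 Hd].
    destruct (barrier (y 1) (fun x => - Pq s g u x) 1) with (t := t) as [_ [_ H3]]; auto.
    + intros x. apply exd_cont. unfold Pq. auto_derive. auto.
    + intros τ Hτ. rewrite <- drift_f1. auto.
  - intros y0 Hy0. split; [|split].
    + intros Hc. destruct (case_i_root s g u hs hg hu Hc) as [b [Hb [Hpb [Hlo Hhi]]]].
      apply (ginf_zero s g u y y0 b); auto.
      destruct (Rtotal_order y0 b) as [Hlt|[Heq|Hgt]].
      * apply (lim_below s g u y y0 b); auto. lra. lra.
      * subst b. apply (lim_eq s g u); auto. lra. intros t Ht.
        apply (bar_root s g u y y0 y0); auto; lra.
      * apply (lim_above s g u y y0 b 1); auto. lra. lra. lra.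
        apply (bar_one s g u); auto.
    + intros Hc. apply ginf_one; auto.
      pose proof (case_ii_pos s g u hs hg hu Hc) as HP.
      apply lim_one with s g u; auto.
      intros t Ht. apply HP. apply (bar_one s g u); auto.
      intros x Hx. apply HP. lra.
    + intros [Hsg [Hsu Hc]].
      destruct (case_iii_roots s g u hs hg hu Hsg Hsu Hc) as [Hr [Hr21 [Hp1 [Hp2 Hfac]]]].
      set (r1 := / 2 * (1 + s / g - sqrt (Defs.sigma s g u))) in *.
      set (r2 := ybar3 s g u) in *.
      assert (Hg' : 0 < g) by lra.
      assert (Plo : forall x, x < r1 -> 0 < Pq s g u x).
      { intros x Hx. rewrite Hfac. assert (0 < (x - r1) * (x - r2)) by nra. nra. }
      assert (Pmid : forall x, r1 < x < r2 -> Pq s g u x < 0).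
      { intros x Hx. rewrite Hfac. assert ((x - r1) * (x - r2) < 0) by nra. nra. }
      assert (Phi : forall x, r2 < x -> 0 < Pq s g u x).
      { intros x Hx. rewrite Hfac. assert (0 < (x - r1) * (x - r2)) by nra. nra. }
      split.
      * intros Hle.
        destruct (Rtotal_order y0 r1) as [Hlt|[Heq|Hgt]].
        -- apply (ginf_zero s g u y y0 r1); auto. lra.
           apply (lim_below s g u y y0 r1); auto. lra. lra.
        -- apply (ginf_zero s g u y y0 r1); auto. lra.
           subst r1. rewrite <- Heq. apply (lim_eq s g u); auto. lra. intros t Ht.
           apply (bar_root s g u y y0 y0); auto; try lra. rewrite Heq; auto.
        -- destruct (Rle_lt_or_eq_dec y0 r2 Hle) as [Hlt2|Heq2].
           ++ apply (ginf_zero s g u y y0 r1); auto. lra.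
              apply (lim_above s g u y y0 r1 r2); auto; try lra.
              intros t Ht. apply (bar_root s g u y y0 r2); auto; lra.
           ++ apply (ginf_zero s g u y y0 r2); auto. lra.
              rewrite <- Heq2. apply (lim_eq s g u); auto. lra. intros t Ht.
              apply (bar_root s g u y y0 y0); auto; try lra. rewrite Heq2; auto.
      * intros Hgt. apply ginf_one; auto.
        apply lim_one with s g u; auto.
        -- intros t Ht. apply Phi. apply (bar_root s g u y y0 r2); auto; lra.
        -- intros x Hx. apply Phi. lra.
Qed.
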